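(* Let $A$ be a densely defined closed operator in a complex Hilbert space $\mathcal{H}$ such that $\operatorname{Num}(A)$ has an interior point, $\operatorname{Num}(A)\neq\mathbb{C}$, $\operatorname{D}(A)\subset\operatorname{D}(A^* )$ and $\sigma(A)\subset\overline{\operatorname{Num}}(A)$. If $\lambda\in\partial\operatorname{Num}(A)$ is a point of unilateral infinite curvature of $\partial\overline{\operatorname{Num}}(A)$ but not a corner point, then $\operatorname{Ran}(A-\lambda I)$ is not closed. In particular, $\lambda\in\sigma_{ess}(A)$.
   Context: $\operatorname{Num}(A)=\{\langle Af,f\rangle: f\in\operatorname{D}(A),\|f\|=1\}$, $\overline{\operatorname{Num}}(A)$ its closure. $\sigma_{ess}(A)=\{\lambda\in\mathbb{C}: A-\lambda I \text{ is not Fredholm}\}$, where an operator is Fredholm if it has closed range and finite-dimensional kernel and cokernel. Curvature conventions. Let $\Omega\subset\mathbb{C}$ be a closed convex set with nonempty interior and $\lambda\in\partial\Omega$. There is at least one supporting line of $\Omega$ through $\lambda$; $\lambda$ is called a corner point if there is more than one. If $\lambda$ is a corner point, $\Omega$ lies in a closed sector with vertex $\lambda$ and semivertical angle $<\pi/2$; take the smallest such sector and let $l_\lambda$ be the supporting line through $\lambda$ orthogonal to the axis of this sector; otherwise $l_\lambda$ is the unique supporting line. Use rectangular coordinates $(\xi,\eta)$ with origin at $\lambda$, $\xi$-axis equal to $l_\lambda$, oriented so that $\Omega\subset\{\eta\ge 0\}$. Let $D'_\varepsilon=\{(\xi,\eta):\xi^2+\eta^2\le\varepsilon^2,\ \xi\neq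 0\}$. Define $\gamma_u^+(\lambda)=\lim_{\varepsilon\downarrow 0}\sup\{\eta/\xi^2:(\xi,\eta)\in\partial\Omega\cap D'_\varepsilon,\ \xi>0\}$ and $\gamma_l^+(\lambda)$ the same with $\inf$ in place of $\sup$; $\gamma_u^-(\lambda),\gamma_l^-(\lambda)$ are defined analogously with $\xi<0$. Set $\gamma_u(\lambda)=\max(\gamma_u^+(\lambda),\gamma_u^-(\lambda))$, $\gamma_l(\lambda)=\min(\gamma_l^+(\lambda),\gamma_l^-(\lambda))$. The point $\lambda$ is of infinite upper curvature if $\gamma_u(\lambda)=\infty$, and of unilateral infinite curvature if $\gamma_l^+(\lambda)=\infty$ or $\gamma_l^-(\lambda)=\infty$. For an operator $A$, these notions at $\lambda\in\partial\operatorname{Num}(A)$ refer to $\Omega=\overline{\operatorname{Num}}(A)$. *)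

(* Defs.v *)
From Stdlib Require Import Reals Lra List.
Open Scope R_scope.

Record Cplx : Type := mkC { Cre : R; Cim : R }.

Definition C0 : Cplx := mkC 0 0.
Definition C1 : Cplx := mkC 1 0.
Definition Ci : Cplx := mkC 0 1.
Definition Cadd (z w : Cplx) : Cplx := mkC (Cre z + Cre w) (Cim z + Cim w).
Definition Copp (z : Cplx) : Cplx := mkC (- Cre z) (- Cim z).
Definition Csub (z w : Cplx) : Cplx := Cadd z (Copp w).
Definition Cmul (z w : Cplx) : Cplx :=
  mkC (Cre z * Cre w - Cim z * Cim w) (Cre z * Cim w + Cim z * Cre w).
Definition Cconj (z : Cplx) : Cplx := mkC (Cre z) (- Cim z).
Definition Cabs (z : Cplx) : R := sqrt (Cre z * Cre z + Cim z * Cim z).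

Record PreHilbert : Type := {
  carrier :> Type;
  hzero : carrier;
  hadd : carrier -> carrier -> carrier;
  hopp : carrier -> carrier;
  hscal : Cplx -> carrier -> carrier;
  inner : carrier -> carrier -> Cplx;
  hadd_assoc : forall x y z, hadd x (hadd y z) = hadd (hadd x y) z;
  hadd_comm : forall x y, hadd x y = hadd y x;
  hadd_zero : forall x, hadd x hzero = x;
  hadd_opp : forall x, hadd x (hopp x) = hzero;
  hscal_one : forall x, hscal C1 x = x;
  hscal_assoc : forall a b x, hscal a (hscal b x) = hscal (Cmul a b) x;
  hscal_addr : forall a x y, hscal a (hadd x y) = hadd (hscal a x) (hscal a y);
  hscal_addl : forall a b x, hscal (Cadd a b) x = hadd (hscal a x) (hscal b x);
  inner_addl : forall x y z, inner (hadd x y) z = Cadd (inner x z) (inner y z);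
  inner_scall : forall a x y, inner (hscal a x) y = Cmul a (inner x y);
  inner_conj : forall x y, inner y x = Cconj (inner x y);
  inner_pos : forall x, 0 <= Cre (inner x x);
  inner_def : forall x, inner x x = C0 -> x = hzero
}.

Arguments hzero {p}.
Arguments hadd {p}.
Arguments hopp {p}.
Arguments hscal {p}.
Arguments inner {p}.

Definition hsub {H : PreHilbert} (x y : H) : H := hadd x (hopp y).
Definition hnorm {H : PreHilbert} (x : H) : R := sqrt (Cre (inner x x)).

Definition hconverges {H : PreHilbert} (u : nat -> H) (l : H) : Prop :=
  forall eps, eps > 0 -> exists N, forall n, (N <= n)%nat -> hnorm (hsub (u n) l) < eps.

Definition hcauchy {H : PreHilbert} (u : nat -> H) : Prop :=
  forall eps, eps > 0 -> exists N, forall m n, (N <= m)%nat -> (N <= n)%nat ->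
    hnorm (hsub (u m) (u n)) < eps.

Record Hilbert : Type := {
  pre :> PreHilbert;
  complete : forall u : nat -> pre, hcauchy u -> exists l, hconverges u l
}.

(* An operator in H: a domain D(A) and the action of A (meaningful on D(A)). *)
Record Operator (H : PreHilbert) : Type := { dom : H -> Prop; app : H -> H }.
Arguments dom {H}.
Arguments app {H}.

Definition linear_operator {H : PreHilbert} (A : Operator H) : Prop :=
  dom A hzero /\
  (forall f g, dom A f -> dom A g -> dom A (hadd f g) /\ app A (hadd f g) = hadd (app A f) (app A g)) /\
  (forall a f, dom A f -> dom A (hscal a f) /\ app A (hscal a f) = hscal a (app A f)).

Definition densely_defined {H : PreHilbert} (A : Operator H) : Prop :=
  forall x eps, eps > 0 -> exists y, dom A y /\ hnorm (hsub x y) < eps.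

Definition closed_operator {H : PreHilbert} (A : Operator H) : Prop :=
  forall (u : nat -> H) x y, (forall n, dom A (u n)) ->
    hconverges u x -> hconverges (fun n => app A (u n)) y ->
    dom A x /\ app A x = y.

Definition adjoint_dom {H : PreHilbert} (A : Operator H) (g : H) : Prop :=
  exists h : H, forall f, dom A f -> inner (app A f) g = inner f h.

Definition shift {H : PreHilbert} (A : Operator H) (l : Cplx) : Operator H :=
  Build_Operator H (dom A) (fun f => hsub (app A f) (hscal l f)).

Definition range {H : PreHilbert} (A : Operator H) (y : H) : Prop :=
  exists f, dom A f /\ y = app A f.

Definition hclosed_set {H : PreHilbert} (S : H -> Prop) : Prop :=
  forall y, (forall eps, eps > 0 -> exists w, S w /\ hnorm (hsub y w) < eps) -> S y.

Fixpoint lin_comb {H : PreHilbert} (cs : list (Cplx * H)) : H :=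
  match cs with
  | nil => hzero
  | cons (a, v) t => hadd (hscal a v) (lin_comb t)
  end.

Definition kernel_finite_dim {H : PreHilbert} (A : Operator H) : Prop :=
  exists vs : list H, forall f, dom A f -> app A f = hzero ->
    exists cs : list Cplx, length cs = length vs /\ f = lin_comb (combine cs vs).

Definition cokernel_finite_dim {H : PreHilbert} (A : Operator H) : Prop :=
  exists vs : list H, forall h : H, exists r cs,
    range A r /\ length cs = length vs /\ h = hadd r (lin_comb (combine cs vs)).

Definition fredholm {H : PreHilbert} (A : Operator H) : Prop :=
  hclosed_set (range A) /\ kernel_finite_dim A /\ cokernel_finite_dim A.

Definition ess_spectrum {H : PreHilbert} (A : Operator H) (l : Cplx) : Prop :=
  ~ fredholm (shift A l).

Definition bounded_map {H : PreHilbert} (B : H -> H) : Prop :=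
  exists M, forall x, hnorm (B x) <= M * hnorm x.

Definition resolvent {H : PreHilbert} (A : Operator H) (l : Cplx) : Prop :=
  exists B : H -> H, bounded_map B /\
    (forall x, dom A (B x) /\ app (shift A l) (B x) = x) /\
    (forall f, dom A f -> B (app (shift A l) f) = f).

Definition spectrum {H : PreHilbert} (A : Operator H) (l : Cplx) : Prop :=
  ~ resolvent A l.

Definition Num {H : PreHilbert} (A : Operator H) (z : Cplx) : Prop :=
  exists f, dom A f /\ hnorm f = 1 /\ z = inner (app A f) f.

Definition Cclosure (S : Cplx -> Prop) (z : Cplx) : Prop :=
  forall eps, eps > 0 -> exists w, S w /\ Cabs (Csub z w) < eps.

Definition Cinterior (S : Cplx -> Prop) (z : Cplx) : Prop :=
  exists eps, eps > 0 /\ forall w, Cabs (Csub w z) < eps -> S w.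

Definition Cboundary (S : Cplx -> Prop) (z : Cplx) : Prop :=
  Cclosure S z /\ ~ Cinterior S z.

(* n (unit vector) is an inner normal of a supporting line of Om at l:
   Om lies in the half-plane { z | Re((z - l) conj n) >= 0 } *)
Definition supporting_normal (Om : Cplx -> Prop) (l n : Cplx) : Prop :=
  Cabs n = 1 /\ forall z, Om z -> Cre (Cmul (Csub z l) (Cconj n)) >= 0.

(* more than one supporting line through l (normals n and -n give the same line) *)
Definition corner_point (Om : Cplx -> Prop) (l : Cplx) : Prop :=
  exists n1 n2, supporting_normal Om l n1 /\ supporting_normal Om l n2 /\
    n1 <> n2 /\ n1 <> Copp n2.

(* n is the inner normal of the distinguished supporting line l_lambda:
   a supporting normal about which the (arc of) supporting normals is
   symmetric; m |-> n*n*conj m is the reflection across the direction n.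
   At a non-corner point this just says n is the (unique) supporting normal;
   at a corner point n is the axis of the smallest sector containing Om. *)
Definition l_normal (Om : Cplx -> Prop) (l n : Cplx) : Prop :=
  supporting_normal Om l n /\
  forall m, supporting_normal Om l m -> supporting_normal Om l (Cmul (Cmul n n) (Cconj m)).

(* coordinates (xi, eta) with origin l, xi-axis = l_lambda (direction i*n),
   eta-axis along the inner normal n *)
Definition xi_coord (l n z : Cplx) : R := Cre (Cmul (Csub z l) (Cconj (Cmul Ci n))).
Definition eta_coord (l n z : Cplx) : R := Cre (Cmul (Csub z l) (Cconj n)).

(* gamma_l^+(l) = infinity: the infimum of eta/xi^2 over Cboundary points in
   D'_eps with xi > 0 tends to +infinity as eps -> 0 *)
Definition gamma_l_plus_infinite (Om : Cplx -> Prop) (l n : Cplx) : Prop :=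
  forall M : R, exists eps, eps > 0 /\
    forall z, Cboundary Om z -> Cabs (Csub z l) <= eps -> xi_coord l n z > 0 ->
      eta_coord l n z / (xi_coord l n z * xi_coord l n z) >= M.

Definition gamma_l_minus_infinite (Om : Cplx -> Prop) (l n : Cplx) : Prop :=
  forall M : R, exists eps, eps > 0 /\
    forall z, Cboundary Om z -> Cabs (Csub z l) <= eps -> xi_coord l n z < 0 ->
      eta_coord l n z / (xi_coord l n z * xi_coord l n z) >= M.

Definition unilateral_infinite_curvature (Om : Cplx -> Prop) (l : Cplx) : Prop :=
  exists n, l_normal Om l n /\
    (gamma_l_plus_infinite Om l n \/ gamma_l_minus_infinite Om l n).

(* Main.v *)
Require Import Defs.
From Stdlib Require Import Reals Lra Lia Psatz ClassicalEpsilon Classical.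
Import Defs.
Open Scope R_scope.

Open Scope R_scope.

Lemma Ceq z w : Cre z = Cre w -> Cim z = Cim w -> z = w.
Proof. destruct z, w; simpl; intros; subst; reflexivity. Qed.

Ltac csolve := apply Ceq; unfold Cadd, Cmul, Copp, Csub, Cconj, C0, C1, Ci in *; simpl; ring.

Lemma Cmul_comm a b : Cmul a b = Cmul b a. Proof. csolve. Qed.
Lemma Cmul_assoc a b c : Cmul a (Cmul b c) = Cmul (Cmul a b) c. Proof. csolve. Qed.
Lemma Cmul_1l a : Cmul C1 a = a. Proof. destruct a; csolve. Qed.
Lemma Cadd_C0 : Cadd C0 C0 = C0. Proof. csolve. Qed.
Lemma Cconj_mul a b : Cconj (Cmul a b) = Cmul (Cconj a) (Cconj b). Proof. csolve. Qed.
Lemma Cconj_conj a : Cconj (Cconj a) = a. Proof. destruct a; csolve. Qed.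
Lemma Cconj_add a b : Cconj (Cadd a b) = Cadd (Cconj a) (Cconj b). Proof. csolve. Qed.

Definition Cn2 (z : Cplx) : R := Cre z * Cre z + Cim z * Cim z.
Definition RC (r : R) : Cplx := mkC r 0.

Lemma Cn2_nonneg z : 0 <= Cn2 z. Proof. unfold Cn2; nra. Qed.
Lemma Cn2_mul a b : Cn2 (Cmul a b) = Cn2 a * Cn2 b. Proof. unfold Cn2, Cmul; simpl; ring. Qed.
Lemma Cabs_Cn2 z : Cabs z = sqrt (Cn2 z). Proof. reflexivity. Qed.
Lemma Cabs_mul a b : Cabs (Cmul a b) = Cabs a * Cabs b.
Proof. rewrite !Cabs_Cn2, Cn2_mul. apply sqrt_mult; apply Cn2_nonneg. Qed.
Lemma Cabs_nonneg z : 0 <= Cabs z. Proof. apply sqrt_pos. Qed.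
Lemma Cabs_sq z : Cabs z * Cabs z = Cn2 z. Proof. apply sqrt_sqrt, Cn2_nonneg. Qed.
Lemma Cre_le_Cabs z : Rabs (Cre z) <= Cabs z.
Proof. pose proof (Cabs_sq z) as E. pose proof (Cabs_nonneg z). unfold Cn2 in E.
  apply Rabs_le; split; nra. Qed.
Lemma Cim_le_Cabs z : Rabs (Cim z) <= Cabs z.
Proof. pose proof (Cabs_sq z) as E. pose proof (Cabs_nonneg z). unfold Cn2 in E.
  apply Rabs_le; split; nra. Qed.
Lemma Cabs_le_sum z : Cabs z <= Rabs (Cre z) + Rabs (Cim z).
Proof. pose proof (Cabs_sq z) as E. pose proof (Cabs_nonneg z). unfold Cn2 in E.
  pose proof (Rabs_pos (Cre z)); pose proof (Rabs_pos (Cim z)).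
  assert (Cre z * Cre z = Rabs (Cre z) * Rabs (Cre z)) by (rewrite <- Rabs_mult; rewrite Rabs_right; nra).
  assert (Cim z * Cim z = Rabs (Cim z) * Rabs (Cim z)) by (rewrite <- Rabs_mult; rewrite Rabs_right; nra).
  nra. Qed.
Lemma Cabs_conj z : Cabs (Cconj z) = Cabs z.
Proof. unfold Cabs, Cconj; simpl. f_equal; ring. Qed.
Lemma Cabs_opp z : Cabs (Copp z) = Cabs z.
Proof. unfold Cabs, Copp; simpl. f_equal; ring. Qed.
Lemma Cabs_C1 : Cabs C1 = 1.
Proof. unfold Cabs, C1; simpl. replace (1*1+0*0) with 1 by ring. apply sqrt_1. Qed.
Lemma Cabs_RC r : Cabs (RC r) = Rabs r.
Proof. unfold Cabs, RC; simpl. replace (r*r+0*0) with (Rsqr r) by (unfold Rsqr; ring). apply sqrt_Rsqr_abs. Qed.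
Lemma Cabs_unit_n2 n : Cabs n = 1 -> Cn2 n = 1.
Proof. intro h. rewrite <- Cabs_sq, h. ring. Qed.
Lemma Cn2_unit_abs n : Cn2 n = 1 -> Cabs n = 1.
Proof. intro h. rewrite Cabs_Cn2, h. apply sqrt_1. Qed.
Lemma Cabs_lt_sq z e : 0 < e -> Cn2 z < e * e -> Cabs z < e.
Proof. intros he h. pose proof (Cabs_sq z); pose proof (Cabs_nonneg z). nra. Qed.
Lemma Cabs_le_sq z e : 0 <= e -> Cabs z <= e -> Cn2 z <= e * e.
Proof. intros he h. pose proof (Cabs_sq z); pose proof (Cabs_nonneg z). nra. Qed.
Lemma Cabs_tri a b : Cabs (Cadd a b) <= Cabs a + Cabs b.
Proof.
  pose proof (Cabs_sq a) as Ha; pose proof (Cabs_sq b) as Hb; pose proof (Cabs_sq (Cadd a b)) as Hab.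
  pose proof (Cabs_nonneg a); pose proof (Cabs_nonneg b); pose proof (Cabs_nonneg (Cadd a b)).
  set (x := Cabs a) in *. set (y := Cabs b) in *. set (w := Cabs (Cadd a b)) in *.
  destruct a as [a1 a2], b as [b1 b2]. unfold Cn2, Cadd in *; simpl in *.
  assert (Hc: a1 * b1 + a2 * b2 <= x * y).
  { assert ((a1 * b1 + a2 * b2)^2 <= (x * y)^2).
    { replace ((x * y)^2) with ((x * x) * (y * y)) by ring.
      rewrite Ha, Hb. pose proof (pow2_ge_0 (a1*b2 - a2*b1)). nra. }
    pose proof (Rmult_le_pos _ _ H H0). nra. }
  nra.
Qed.

Open Scope R_scope.

Section HB.
Context {H : PreHilbert}.
Implicit Types x y z : H.

Lemma hadd_zero_l x : hadd hzero x = x.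
Proof. rewrite hadd_comm. apply hadd_zero. Qed.

Lemma hadd_cancel_self (v : H) : hadd v v = v -> v = hzero.
Proof. intro e. transitivity (hadd (hadd v v) (hopp v)).
  rewrite <- hadd_assoc, hadd_opp, hadd_zero. reflexivity.
  rewrite e. apply hadd_opp. Qed.

Lemma hscal_C0 x : hscal C0 x = hzero.
Proof. apply hadd_cancel_self. rewrite <- hscal_addl. rewrite Cadd_C0. reflexivity. Qed.

Lemma hopp_unique x y : hadd x y = hzero -> y = hopp x.
Proof. intro e. rewrite <- (hadd_zero H y). rewrite <- (hadd_opp H x).
  rewrite hadd_assoc, (hadd_comm H y x), e. apply hadd_zero_l. Qed.

Lemma hopp_scal x : hopp x = hscal (Copp C1) x.
Proof. symmetry. apply hopp_unique. rewrite <- (hscal_one H x) at 1.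
  rewrite <- hscal_addl. replace (Cadd C1 (Copp C1)) with C0 by csolve. apply hscal_C0. Qed.

Lemma hscal_zero a : hscal a (@hzero H) = hzero.
Proof. apply hadd_cancel_self. rewrite <- hscal_addr, hadd_zero. reflexivity. Qed.

Lemma inner_addr x y z : inner x (hadd y z) = Cadd (inner x y) (inner x z).
Proof. rewrite inner_conj, inner_addl, Cconj_add, <- !inner_conj. reflexivity. Qed.

Lemma inner_scalr a x y : inner x (hscal a y) = Cmul (Cconj a) (inner x y).
Proof. rewrite inner_conj, inner_scall, Cconj_mul, <- inner_conj. reflexivity. Qed.

Lemma inner_zero_l y : inner hzero y = C0.
Proof. rewrite <- (hscal_C0 hzero), inner_scall. csolve. Qed.
Lemma inner_zero_r y : inner y hzero = C0.
Proof. rewrite inner_conj, inner_zero_l. csolve. Qed.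

Lemma inner_oppl x y : inner (hopp x) y = Copp (inner x y).
Proof. rewrite hopp_scal, inner_scall. csolve. Qed.
Lemma inner_oppr x y : inner x (hopp y) = Copp (inner x y).
Proof. rewrite hopp_scal, inner_scalr. csolve. Qed.
Lemma inner_subl x y z : inner (hsub x y) z = Csub (inner x z) (inner y z).
Proof. unfold hsub. rewrite inner_addl, inner_oppl. reflexivity. Qed.
Lemma inner_subr x y z : inner z (hsub x y) = Csub (inner z x) (inner z y).
Proof. unfold hsub. rewrite inner_addr, inner_oppr. reflexivity. Qed.

Lemma inner_self_im x : Cim (inner x x) = 0.
Proof. pose proof (inner_conj H x x) as e. apply (f_equal Cim) in e. simpl in e. lra. Qed.

Definition nn x := Cre (inner x x).
Lemma nn_nonneg x : 0 <= nn x. Proof. apply inner_pos. Qed.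
Lemma nn_zero x : nn x = 0 -> x = hzero.
Proof. intro h. apply inner_def. apply Ceq. exact h. apply inner_self_im. Qed.
Lemma inner_self x : inner x x = RC (nn x).
Proof. apply Ceq; simpl. reflexivity. apply inner_self_im. Qed.

Lemma nn_add x y : nn (hadd x y) = nn x + nn y + 2 * Cre (inner x y).
Proof. unfold nn. rewrite inner_addl, !inner_addr. rewrite (inner_conj H x y). simpl. ring. Qed.
Lemma nn_sub x y : nn (hsub x y) = nn x + nn y - 2 * Cre (inner x y).
Proof. unfold hsub. rewrite nn_add, inner_oppr. unfold nn. rewrite inner_oppl, inner_oppr. simpl. ring. Qed.
Lemma nn_scal a x : nn (hscal a x) = Cn2 a * nn x.
Proof. unfold nn. rewrite inner_scall, inner_scalr, inner_self. unfold Cn2; simpl. ring. Qed.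

Lemma hnorm_nn x : hnorm x = sqrt (nn x). Proof. reflexivity. Qed.
Lemma hnorm_nonneg x : 0 <= hnorm x. Proof. apply sqrt_pos. Qed.
Lemma hnorm_sq x : hnorm x * hnorm x = nn x. Proof. apply sqrt_sqrt, nn_nonneg. Qed.
Lemma hnorm_scal a x : hnorm (hscal a x) = Cabs a * hnorm x.
Proof. unfold hnorm. fold (nn (hscal a x)) (nn x). rewrite nn_scal, Cabs_Cn2.
  apply sqrt_mult. apply Cn2_nonneg. apply nn_nonneg. Qed.
Lemma hnorm_zero_eq x : hnorm x = 0 -> x = hzero.
Proof. intro h. apply nn_zero. rewrite <- hnorm_sq, h. ring. Qed.
Lemma hnorm_hzero : hnorm (@hzero H) = 0.
Proof. unfold hnorm. rewrite inner_zero_l. simpl. apply sqrt_0. Qed.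

Lemma CS x y : Cn2 (inner x y) <= nn x * nn y.
Proof.
  destruct (Req_dec (nn y) 0) as [h|h].
  - apply nn_zero in h. subst y. rewrite inner_zero_r. unfold Cn2; simpl.
    unfold nn. rewrite inner_zero_l. simpl. lra.
  - pose proof (nn_nonneg y).
    set (t := Cmul (inner x y) (RC (/ nn y))).
    pose proof (nn_nonneg (hsub x (hscal t y))) as P.
    rewrite nn_sub, nn_scal, inner_scalr in P.
    unfold t, Cn2 in *. destruct (inner x y) as [c1 c2]. simpl in *.
    set (k := / nn y) in *. set (ny := nn y) in *. set (nx := nn x) in *.
    assert (hk: ny * k = 1) by (unfold k; field; lra).
    assert (0 <= ny * (nx + ((c1 * k - c2 * 0) * (c1 * k - c2 * 0) + (c1 * 0 + c2 * k) * (c1 * 0 + c2 * k)) * ny -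
      2 * ((c1 * k - c2 * 0) * c1 - - (c1 * 0 + c2 * k) * c2))) by nra.
    replace (ny * (nx + ((c1 * k - c2 * 0) * (c1 * k - c2 * 0) + (c1 * 0 + c2 * k) * (c1 * 0 + c2 * k)) * ny -
      2 * ((c1 * k - c2 * 0) * c1 - - (c1 * 0 + c2 * k) * c2))) with
      (nx * ny + (c1*c1+c2*c2) * (ny*k) * (ny*k) - 2 * (c1*c1+c2*c2)*(ny*k)) in H1 by ring.
    rewrite hk in H1. nra.
Qed.

Lemma veq x y : (forall z, inner x z = inner y z) -> x = y.
Proof. intro h. assert (E: hsub x y = hzero).
  { apply inner_def. rewrite inner_subl, !inner_subr, !h. csolve. }
  rewrite <- (hadd_zero H x). rewrite <- (hadd_opp H y). rewrite hadd_assoc.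
  rewrite (hadd_comm H x y). rewrite <- hadd_assoc. fold (hsub x y). rewrite E. apply hadd_zero. Qed.

Lemma inner_re_bound x y : Cre (inner x y) <= hnorm x * hnorm y.
Proof. pose proof (CS x y). pose proof (Cre_le_Cabs (inner x y)).
  assert (Cabs (inner x y) <= hnorm x * hnorm y).
  { pose proof (Cabs_sq (inner x y)). pose proof (hnorm_sq x). pose proof (hnorm_sq y).
    pose proof (Cabs_nonneg (inner x y)). pose proof (hnorm_nonneg x). pose proof (hnorm_nonneg y).
    pose proof (Rmult_le_pos _ _ H6 H7).
    assert (Cabs (inner x y) * Cabs (inner x y) <= (hnorm x * hnorm y) * (hnorm x * hnorm y)).
    { replace ((hnorm x * hnorm y) * (hnorm x * hnorm y)) with ((hnorm x * hnorm x) * (hnorm y * hnorm y)) by ring.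
      rewrite H2, H3, H4. exact H0. }
    nra. }
  pose proof (Rle_abs (Cre (inner x y))). lra. Qed.

Lemma inner_abs_bound x y : Cabs (inner x y) <= hnorm x * hnorm y.
Proof. pose proof (CS x y).
    pose proof (Cabs_sq (inner x y)). pose proof (hnorm_sq x). pose proof (hnorm_sq y).
    pose proof (Cabs_nonneg (inner x y)). pose proof (hnorm_nonneg x). pose proof (hnorm_nonneg y).
    pose proof (Rmult_le_pos _ _ H5 H6).
    assert (Cabs (inner x y) * Cabs (inner x y) <= (hnorm x * hnorm y) * (hnorm x * hnorm y)).
    { replace ((hnorm x * hnorm y) * (hnorm x * hnorm y)) with ((hnorm x * hnorm x) * (hnorm y * hnorm y)) by ring.
      rewrite H1, H2, H3. exact H0. }
    nra. Qed.

Lemma hnorm_le_of_sq x r : 0 <= r -> nn x <= r * r -> hnorm x <= r.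
Proof. intros hr h. pose proof (hnorm_sq x). pose proof (hnorm_nonneg x). nra. Qed.

Lemma hnorm_tri x y : hnorm (hadd x y) <= hnorm x + hnorm y.
Proof. apply hnorm_le_of_sq. pose proof (hnorm_nonneg x); pose proof (hnorm_nonneg y); lra.
  rewrite nn_add. pose proof (inner_re_bound x y). rewrite <- (hnorm_sq x), <- (hnorm_sq y). nra. Qed.

End HB.

Ltac vec := apply veq; intro; repeat rewrite ?inner_addl, ?inner_scall, ?inner_subl, ?inner_oppl, ?inner_zero_l; csolve.

Section HB2.
Context {H : PreHilbert}.
Implicit Types x y z : H.

Lemma hnorm_tri_sub x y z : hnorm (hsub x z) <= hnorm (hsub x y) + hnorm (hsub y z).
Proof. replace (hsub x z) with (hadd (hsub x y) (hsub y z)) by vec. apply hnorm_tri. Qed.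

Lemma hnorm_sub_sym x y : hnorm (hsub x y) = hnorm (hsub y x).
Proof. replace (hsub y x) with (hscal (Copp C1) (hsub x y)) by vec.
  rewrite hnorm_scal, Cabs_opp, Cabs_C1. ring. Qed.

Lemma hnorm_opp x : hnorm (hopp x) = hnorm x.
Proof. rewrite hopp_scal, hnorm_scal, Cabs_opp, Cabs_C1. ring. Qed.

Lemma hnorm_sub_le x y : hnorm (hsub x y) <= hnorm x + hnorm y.
Proof. unfold hsub. rewrite <- (hnorm_opp y). apply hnorm_tri. Qed.

Lemma hnorm_rev x y : hnorm x - hnorm y <= hnorm (hsub x y).
Proof. pose proof (hnorm_tri_sub x hzero y). replace (hsub x hzero) with x in H0 by vec.
  replace (hsub hzero y) with (hopp y) in H0 by vec. rewrite hnorm_opp in H0.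
  pose proof (hnorm_tri_sub x y hzero). replace (hsub x hzero) with x in H1 by vec.
  replace (hsub y hzero) with y in H1 by vec. lra. Qed.

Lemma hnorm_rev2 x y : Rabs (hnorm x - hnorm y) <= hnorm (hsub x y).
Proof. apply Rabs_le. pose proof (hnorm_rev x y). pose proof (hnorm_rev y x).
  rewrite hnorm_sub_sym in H1. lra. Qed.

Lemma hnorm_add_lower x y : hnorm x - hnorm y <= hnorm (hadd x y).
Proof. pose proof (hnorm_rev x (hopp y)). rewrite hnorm_opp in H0.
  replace (hsub x (hopp y)) with (hadd x y) in H0 by vec. exact H0. Qed.

End HB2.

Ltac vecf := apply veq; intro; repeat rewrite ?inner_addl, ?inner_scall, ?inner_subl, ?inner_oppl, ?inner_zero_l;
  apply Ceq; unfold Cadd, Cmul, Copp, Csub, Cconj, C0, C1, Ci in *; simpl; field.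

Open Scope R_scope.

Section Conv.
Context {H : PreHilbert}.
Implicit Types x y z : H.

Lemma conv_add (u v : nat -> H) x y : hconverges u x -> hconverges v y ->
  hconverges (fun k => hadd (u k) (v k)) (hadd x y).
Proof. intros hu hv e he. destruct (hu (e/2)) as [N1 h1]. lra. destruct (hv (e/2)) as [N2 h2]. lra.
  exists (max N1 N2). intros k hk. specialize (h1 k ltac:(lia)). specialize (h2 k ltac:(lia)).
  replace (hsub (hadd (u k) (v k)) (hadd x y)) with (hadd (hsub (u k) x) (hsub (v k) y)) by vec.
  pose proof (hnorm_tri (hsub (u k) x) (hsub (v k) y)). lra. Qed.

Lemma conv_scal (u : nat -> H) x a : hconverges u x -> hconverges (fun k => hscal a (u k)) (hscal a x).
Proof. intros hu e he. destruct (hu (e / (Cabs a + 1))) as [N h].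
  apply Rdiv_lt_0_compat; [lra| pose proof (Cabs_nonneg a); lra].
  exists N. intros k hk. specialize (h k hk).
  replace (hsub (hscal a (u k)) (hscal a x)) with (hscal a (hsub (u k) x)) by vec.
  rewrite hnorm_scal. pose proof (Cabs_nonneg a). pose proof (hnorm_nonneg (hsub (u k) x)).
  apply Rle_lt_trans with ((Cabs a + 1) * hnorm (hsub (u k) x)). nra.
  replace e with ((Cabs a + 1) * (e / (Cabs a + 1))) by (field; lra).
  apply Rmult_lt_compat_l; lra. Qed.

Lemma conv_const x : hconverges (fun _ => x) x.
Proof. intros e he. exists 0%nat. intros. replace (hsub x x) with (@hzero H) by vec.
  rewrite hnorm_hzero. lra. Qed.

Lemma conv_sub (u v : nat -> H) x y : hconverges u x -> hconverges v y ->
  hconverges (fun k => hsub (u k) (v k)) (hsub x y).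
Proof. intros hu hv. pose proof (conv_add u (fun k => hscal (Copp C1) (v k)) x (hscal (Copp C1) y) hu
   (conv_scal v y _ hv)) as h. intros e he. destruct (h e he) as [N hN]. exists N. intros k hk.
  specialize (hN k hk). replace (hsub (hsub (u k) (v k)) (hsub x y)) with
   (hsub (hadd (u k) (hscal (Copp C1) (v k))) (hadd x (hscal (Copp C1) y))) by vec. exact hN. Qed.

Lemma conv_ext (u v : nat -> H) x : (forall k, u k = v k) -> hconverges u x -> hconverges v x.
Proof. intros e hu eps he. destruct (hu eps he) as [N h]. exists N. intros k hk. rewrite <- e. auto. Qed.

Lemma conv_bound (u : nat -> H) x c r N : hconverges u x ->
  (forall k, (N <= k)%nat -> hnorm (hsub (u k) c) <= r) -> hnorm (hsub x c) <= r.
Proof. intros hu hb. apply Rnot_lt_le. intro hlt.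
  destruct (hu (hnorm (hsub x c) - r)) as [M hM]. lra.
  specialize (hM (max N M) ltac:(lia)). specialize (hb (max N M) ltac:(lia)).
  pose proof (hnorm_tri_sub x (u (max N M)) c). rewrite hnorm_sub_sym in hM. lra. Qed.

Lemma closed_limit (P : H -> Prop) (u : nat -> H) x : hclosed_set P -> (forall k, P (u k)) ->
  hconverges u x -> P x.
Proof. intros hP hu hc. apply hP. intros e he. destruct (hc e he) as [N hN]. exists (u N).
  split. auto. rewrite hnorm_sub_sym. apply hN. lia. Qed.

Lemma cauchy_geom (u : nat -> H) C r : 0 <= r < 1 ->
  (forall m j, hnorm (hsub (u (m + j)%nat) (u m)) <= C * r ^ m) -> hcauchy u.
Proof. intros hr hb e he.
  destruct (Rle_dec C 0) as [hC|hC].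
  - exists 0%nat. intros m n hm hn. pose proof (hb 0%nat m) as h1. pose proof (hb 0%nat n) as h2.
    simpl in h1, h2. pose proof (hnorm_nonneg (hsub (u m) (u 0%nat))).
    pose proof (hnorm_tri_sub (u m) (u 0%nat) (u n)). rewrite (hnorm_sub_sym (u 0%nat) (u n)) in H1.
    pose proof (hnorm_nonneg (hsub (u n) (u 0%nat))). nra.
  - destruct (pow_lt_1_zero r ltac:(rewrite Rabs_right; lra) (e / (2 * C))) as [N hN].
    apply Rdiv_lt_0_compat; lra.
    exists N. intros m n hm hn. specialize (hN N (le_n _)). rewrite Rabs_right in hN by (apply Rle_ge, pow_le; lra).
    pose proof (hb N (m - N)%nat) as h1. pose proof (hb N (n - N)%nat) as h2.
    replace (N + (m - N))%nat with m in h1 by lia. replace (N + (n - N))%nat with n in h2 by lia.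
    pose proof (hnorm_tri_sub (u m) (u N) (u n)). rewrite (hnorm_sub_sym (u N) (u n)) in H0.
    assert (C * r ^ N < e / 2). { replace (e/2) with (C * (e / (2 * C))) by (field; lra).
      apply Rmult_lt_compat_l; lra. }
    lra. Qed.

Lemma conv_norm_bound (u : nat -> H) x r N : hconverges u x ->
  (forall k, (N <= k)%nat -> hnorm (u k) <= r) -> hnorm x <= r.
Proof. intros hu hb. replace x with (hsub x hzero) by vec. apply (conv_bound u x hzero r N hu).
  intros k hk. replace (hsub (u k) hzero) with (u k) by vec. auto. Qed.

End Conv.

Open Scope R_scope.

Definition subspace {H : PreHilbert} (K : H -> Prop) : Prop :=
  K hzero /\ (forall x y, K x -> K y -> K (hadd x y)) /\ (forall a x, K x -> K (hscal a x)).

Lemma choose_seq {T : Type} (P : nat -> T -> Prop) : (forall j, exists t, P j t) -> exists f : nat -> T, forall j, P j (f j).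
Proof. intro h. exists (fun j => proj1_sig (constructive_indefinite_description _ (h j))).
  intro j. exact (proj2_sig (constructive_indefinite_description _ (h j))). Qed.

Section Proj.
Context {H : Hilbert}.

Lemma sqrt_lt_of x e : 0 < e -> 0 <= x -> x < e * e -> sqrt x < e.
Proof. intros he hx h. rewrite <- (sqrt_square e) by lra. apply sqrt_lt_1; nra. Qed.

Lemma projection (K : H -> Prop) : subspace K -> hclosed_set K ->
  forall x : H, exists p, K p /\ forall k, K k -> inner (hsub x p) k = C0.
Proof.
  intros [K0 [Kadd Kscal]] Kcl x.
  set (E := fun r => exists k, K k /\ r = - nn (hsub x k)).
  destruct (completeness E) as [m [hub hlub]].
  { exists 0. intros r [k [_ ->]]. pose proof (nn_nonneg (hsub x k)). lra. }
  { exists (- nn (hsub x hzero)). exists hzero. auto. }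
  set (d2 := - m).
  assert (Hlow : forall k, K k -> d2 <= nn (hsub x k)).
  { intros k hk. assert (E (- nn (hsub x k))) by (exists k; auto). specialize (hub _ H0). unfold d2. lra. }
  assert (Hnear : forall e, 0 < e -> exists k, K k /\ nn (hsub x k) < d2 + e).
  { intros e he. apply Classical_Prop.NNPP. intro hn.
    assert (is_upper_bound E (m - e)).
    { intros r [k [hk ->]]. apply Rnot_lt_le. intro hlt. apply hn. exists k. split. auto. unfold d2. lra. }
    specialize (hlub _ H0). lra. }
  destruct (choose_seq (fun j k => K k /\ nn (hsub x k) < d2 + / (INR j + 1))) as [ks hks].
  { intro j. apply Hnear. apply Rinv_0_lt_compat. pose proof (pos_INR j). lra. }
  assert (Hpar : forall i j, nn (hsub (ks i) (ks j)) <= 2 * / (INR i + 1) + 2 * / (INR j + 1)).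
  { intros i j. destruct (hks i) as [ki hi]. destruct (hks j) as [kj hj].
    set (a := hsub x (ks i)). set (b := hsub x (ks j)).
    assert (e1: nn (hsub a b) + nn (hadd a b) = 2 * nn a + 2 * nn b).
    { rewrite nn_sub, nn_add. lra. }
    set (mid := hscal (RC (/2)) (hadd (ks i) (ks j))).
    assert (Km : K mid) by (apply Kscal, Kadd; auto).
    assert (e2: hadd a b = hscal (RC 2) (hsub x mid)) by (unfold a, b, mid, RC; vecf).
    assert (e3: hsub a b = hsub (ks j) (ks i)) by (unfold a, b; vec).
    rewrite e2, nn_scal, e3 in e1. specialize (Hlow mid Km).
    assert (nn (hsub (ks i) (ks j)) = nn (hsub (ks j) (ks i))).
    { rewrite <- !hnorm_sq, hnorm_sub_sym. ring. }
    unfold Cn2, RC in e1; simpl in e1. fold a in hi. fold b in hj. lra. }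
  assert (Hc : hcauchy ks).
  { intros e he. destruct (INR_archimed (e*e) 4) as [N hN]. nra.
    exists N. intros i j hi hj. apply sqrt_lt_of; auto. apply nn_nonneg.
    specialize (Hpar i j).
    assert (INR N <= INR i) by (apply le_INR; lia). assert (INR N <= INR j) by (apply le_INR; lia).
    pose proof (pos_INR N).
    assert (/ (INR i + 1) <= / (INR N + 1)) by (apply Rinv_le_contravar; lra).
    assert (/ (INR j + 1) <= / (INR N + 1)) by (apply Rinv_le_contravar; lra).
    assert (4 * / (INR N + 1) < e * e).
    { apply (Rmult_lt_reg_r (INR N + 1)). lra. field_simplify. nra. lra. }
    unfold nn in Hpar. lra. }
  destruct (complete H ks Hc) as [p hp].
  assert (Kp : K p) by (apply (closed_limit K ks p Kcl); [intro j; apply hks | exact hp]).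
  exists p. split. exact Kp.
  assert (Hpd : nn (hsub x p) <= d2).
  { apply Rnot_lt_le. intro hlt.
    set (e := nn (hsub x p) - d2).
    destruct (INR_archimed e 2) as [N hN]. unfold e; lra.
    assert (hb : hnorm (hsub x p) <= sqrt (d2 + / (INR N + 1))).
    { apply (conv_norm_bound (fun j => hsub x (ks j)) _ _ N).
      - apply conv_sub. apply conv_const. exact hp.
      - intros j hj. apply sqrt_le_1_alt. destruct (hks j) as [_ h].
        assert (INR N <= INR j) by (apply le_INR; lia). pose proof (pos_INR N).
        assert (/ (INR j + 1) <= / (INR N + 1)) by (apply Rinv_le_contravar; lra). unfold nn in h. lra. }
    assert (d2 >= 0). { assert (m <= 0). { apply hlub. intros r [k [_ ->]]. pose proof (nn_nonneg (hsub x k)). lra. }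
      unfold d2; lra. }
    pose proof (pos_INR N).
    assert (/ (INR N + 1) < e).
    { apply (Rmult_lt_reg_r (INR N + 1)). lra. rewrite Rinv_l by lra. nra. }
    pose proof (hnorm_nonneg (hsub x p)).
    assert (nn (hsub x p) <= d2 + / (INR N + 1)).
    { rewrite <- hnorm_sq. assert (hq: 0 <= d2 + / (INR N + 1)). { pose proof (Rinv_0_lt_compat (INR N + 1)). lra. }
      pose proof (sqrt_sqrt _ hq). pose proof (sqrt_pos (d2 + / (INR N + 1))). nra. }
    unfold e in *. lra. }
  intros k hk. set (v := hsub x p). set (c := inner v k).
  assert (Hs : forall s, 2 * Cre (Cmul (Cconj s) c) <= Cn2 s * nn k).
  { intro s. assert (K (hadd p (hscal s k))) by (apply Kadd; auto).
    specialize (Hlow _ H0). replace (hsub x (hadd p (hscal s k))) with (hsub v (hscal s k)) in Hlow by (unfold v; vec).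
    rewrite nn_sub, nn_scal, inner_scalr in Hlow. fold c in Hlow.
    fold v in Hpd. pose proof (Cn2_nonneg s). lra. }
  pose proof (nn_nonneg k).
  specialize (Hs (Cmul (RC (/ (nn k + 1))) c)).
  clearbody c. destruct c as [c1 c2]. unfold Cn2, Cmul, Cconj, RC in Hs; simpl in Hs.
  set (t := / (nn k + 1)) in *. assert (ht : 0 < t) by (apply Rinv_0_lt_compat; lra).
  assert (htk : t * nn k < 1) by (unfold t; apply (Rmult_lt_reg_r (nn k + 1)); [lra| field_simplify; lra]).
  assert (hX: 2 * t * (c1 * c1 + c2 * c2) <= t * (t * nn k) * (c1 * c1 + c2 * c2)).
  { replace (2 * t * (c1 * c1 + c2 * c2)) with (2 * ((t * c1 - 0 * c2) * c1 - - (t * c2 + 0 * c1) * c2)) by ring.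
    replace (t * (t * nn k) * (c1 * c1 + c2 * c2)) with (((t * c1 - 0 * c2) * (t * c1 - 0 * c2) +
     (t * c2 + 0 * c1) * (t * c2 + 0 * c1)) * nn k) by ring. exact Hs. }
  assert (hX0 : 0 <= c1 * c1 + c2 * c2) by nra.
  assert (t * (c1 * c1 + c2 * c2) <= 0).
  { assert (t * (t * nn k) * (c1 * c1 + c2 * c2) <= t * (c1 * c1 + c2 * c2)).
    { apply Rmult_le_compat_r. exact hX0. nra. }
    lra. }
  assert (c1 * c1 + c2 * c2 <= 0) by nra.
  apply Ceq; simpl; nra.
Qed.
End Proj.

Open Scope R_scope.

Lemma choose_fun {A T : Type} (P : A -> T -> Prop) : (forall a, exists t, P a t) -> exists f : A -> T, forall a, P a (f a).
Proof. intro h. exists (fun a => proj1_sig (constructive_indefinite_description _ (h a))).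
  intro a. exact (proj2_sig (constructive_indefinite_description _ (h a))). Qed.

Fixpoint iter_seq {T : Type} (F : nat -> T -> T) (t0 : T) (n : nat) : T :=
  match n with O => t0 | S m => F m (iter_seq F t0 m) end.

Section OM.
Context {H : Hilbert}.
Variable D : H -> Prop.
Variable S : H -> H.
Hypothesis D0 : D hzero.
Hypothesis Dadd : forall f g, D f -> D g -> D (hadd f g) /\ S (hadd f g) = hadd (S f) (S g).
Hypothesis Dscal : forall a f, D f -> D (hscal a f) /\ S (hscal a f) = hscal a (S f).
Hypothesis Sclosed : forall (u : nat -> H) x y, (forall k, D (u k)) -> hconverges u x ->
   hconverges (fun k => S (u k)) y -> D x /\ S x = y.

Definition Rg (y : H) : Prop := exists f, D f /\ y = S f.

Lemma S0 : S hzero = hzero.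
Proof. rewrite <- (hscal_C0 hzero). rewrite (proj2 (Dscal C0 hzero D0)). rewrite !hscal_C0. reflexivity. Qed.

Lemma Dsub f g : D f -> D g -> D (hsub f g) /\ S (hsub f g) = hsub (S f) (S g).
Proof. intros hf hg. unfold hsub. rewrite hopp_scal. destruct (Dscal (Copp C1) g hg) as [h1 h2].
  destruct (Dadd f _ hf h1) as [h3 h4]. split; auto. rewrite h4, h2, hopp_scal. reflexivity. Qed.

Lemma Rg_sub : subspace Rg.
Proof. split; [|split].
  - exists hzero. split; auto. symmetry; apply S0.
  - intros x y [f [hf ->]] [g [hg ->]]. exists (hadd f g). destruct (Dadd f g hf hg). split; auto.
  - intros a x [f [hf ->]]. exists (hscal a f). destruct (Dscal a f hf). split; auto.
Qed.

Lemma Rg_add x y : Rg x -> Rg y -> Rg (hadd x y). Proof. apply Rg_sub. Qed.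
Lemma Rg_scal a x : Rg x -> Rg (hscal a x). Proof. apply Rg_sub. Qed.
Lemma Rg_hsub x y : Rg x -> Rg y -> Rg (hsub x y).
Proof. intros hx hy. unfold hsub. rewrite hopp_scal. apply Rg_add; auto. apply Rg_scal; auto. Qed.
Lemma Rg_S f : D f -> Rg (S f). Proof. intro h. exists f; auto. Qed.

Definition EN (N : nat) (y : H) : Prop :=
  Rg y /\ forall e, 0 < e -> exists u, D u /\ hnorm u <= INR N /\ hnorm (hsub y (S u)) < e.

Lemma EN_cover y : Rg y -> exists N, EN N y.
Proof. intros [f [hf ->]]. destruct (INR_archimed 1 (hnorm f)) as [N hN]. lra.
  exists N. split. exists f; auto. intros e he. exists f. split; auto. split. lra.
  replace (hsub (S f) (S f)) with (@hzero H) by vec. rewrite hnorm_hzero. lra. Qed.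

Hypothesis Rg_closed : hclosed_set Rg.

Lemma baire : exists N y0 rho, 0 < rho /\ Rg y0 /\ forall y, Rg y -> hnorm (hsub y y0) < rho -> EN N y.
Proof.
  apply NNPP. intro hneg.
  assert (hn : forall N y0 rho, 0 < rho -> Rg y0 -> exists y, Rg y /\ hnorm (hsub y y0) < rho /\ ~ EN N y).
  { intros N y0 rho hr hy0. apply NNPP. intro h2. apply hneg. exists N, y0, rho. split; auto. split; auto.
    intros y hy hd. apply NNPP. intro h3. apply h2. exists y. auto. }
  assert (hstep : forall (N : nat) (p : H * R), exists p' : H * R, (Rg (fst p) /\ 0 < snd p) ->
     Rg (fst p') /\ 0 < snd p' /\ snd p' <= snd p / 4 /\ hnorm (hsub (fst p') (fst p)) < snd p / 2 /\
     forall y', hnorm (hsub y' (fst p')) <= snd p' -> ~ EN N y').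
  { intros N [y0 rho]. simpl. destruct (classic (Rg y0 /\ 0 < rho)) as [[hy0 hr]|hc].
    2:{ exists (y0, rho). intro; contradiction. }
    destruct (hn N y0 (rho/2) ltac:(lra) hy0) as [y [hy [hd hE]]].
    assert (he : exists e, 0 < e /\ forall u, D u -> hnorm u <= INR N -> e <= hnorm (hsub y (S u))).
    { apply NNPP. intro h4. apply hE. split; auto. intros e he. apply NNPP. intro h5. apply h4.
      exists e. split; auto. intros u hu hun. apply Rnot_lt_le. intro hl. apply h5. exists u. auto. }
    destruct he as [e [he hu]].
    exists (y, Rmin (e/2) (rho/4)). intros _. simpl. split; auto. split. apply Rmin_glb_lt; lra.
    split. apply Rmin_r. split. lra.
    intros y' hy' [_ hE']. destruct (hE' (e/2) ltac:(lra)) as [u [hDu [hun hus]]].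
    specialize (hu u hDu hun). pose proof (hnorm_tri_sub y y' (S u)). rewrite hnorm_sub_sym in hy'.
    pose proof (Rmin_l (e/2) (rho/4)). lra. }
  destruct (choose_fun (fun (Np : nat * (H * R)) p' => (Rg (fst (snd Np)) /\ 0 < snd (snd Np)) ->
     Rg (fst p') /\ 0 < snd p' /\ snd p' <= snd (snd Np) / 4 /\ hnorm (hsub (fst p') (fst (snd Np))) < snd (snd Np) / 2 /\
     forall y', hnorm (hsub y' (fst p')) <= snd p' -> ~ EN (fst Np) y')) as [F hF].
  { intros [N p]. apply hstep. }
  set (g := iter_seq (fun n p => F (n, p)) (hzero, 1)).
  assert (ginv : forall n, Rg (fst (g n)) /\ 0 < snd (g n)).
  { induction n. simpl. split. apply Rg_sub. lra.
    destruct (hF (n, g n) IHn) as [a [b _]]. simpl. split; auto. }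
  assert (gstep : forall n, snd (g (Datatypes.S n)) <= snd (g n) / 4 /\ hnorm (hsub (fst (g (Datatypes.S n))) (fst (g n))) < snd (g n) / 2 /\
      forall y', hnorm (hsub y' (fst (g (Datatypes.S n)))) <= snd (g (Datatypes.S n)) -> ~ EN n y').
  { intro n. destruct (hF (n, g n) (ginv n)) as [_ [_ [a [b c]]]]. simpl in *. auto. }
  assert (grho : forall n, snd (g n) <= (/4) ^ n).
  { induction n. simpl. lra. destruct (gstep n) as [a _]. replace ((/4)^(Datatypes.S n)) with (/4 * (/4)^n) by reflexivity. lra. }
  assert (gchain : forall j m, hnorm (hsub (fst (g (m + j)%nat)) (fst (g m))) + 2/3 * snd (g (m + j)%nat) <= 2/3 * snd (g m)).
  { induction j; intro m.
    - replace (m + 0)%nat with m by lia. replace (hsub (fst (g m)) (fst (g m))) with (@hzero H) by vec.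
      rewrite hnorm_hzero. lra.
    - replace (m + Datatypes.S j)%nat with (Datatypes.S (m + j)) by lia. destruct (gstep (m + j)%nat) as [a [b _]].
      specialize (IHj m). pose proof (hnorm_tri_sub (fst (g (Datatypes.S (m + j)))) (fst (g (m + j)%nat)) (fst (g m))). lra. }
  assert (gc : hcauchy (fun n => fst (g n))).
  { apply (cauchy_geom _ (2/3) (/4)). lra. intros m j. specialize (gchain j m).
    pose proof (ginv (m + j)%nat) as [_ hp]. pose proof (grho m). lra. }
  destruct (complete H (fun n => fst (g n)) gc) as [ys hys].
  assert (Rys : Rg ys) by (apply (closed_limit Rg (fun n => fst (g n)) ys Rg_closed); [intro k; apply ginv | exact hys]).
  destruct (EN_cover ys Rys) as [N hN].
  destruct (gstep N) as [_ [_ hno]]. apply (hno ys); auto.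
  apply (conv_bound (fun n => fst (g n)) ys _ _ (Datatypes.S N) hys). intros k hk. specialize (gchain (k - Datatypes.S N)%nat (Datatypes.S N)).
  replace (Datatypes.S N + (k - Datatypes.S N))%nat with k in gchain by lia. pose proof (ginv k) as [_ hp]. pose proof (ginv (Datatypes.S N)) as [_ hp2]. lra.
Qed.

Lemma approx2 : exists L1, 0 <= L1 /\ forall y, Rg y -> exists u, D u /\ hnorm u <= L1 * hnorm y /\
   hnorm (hsub y (S u)) <= hnorm y / 2.
Proof.
  destruct baire as [N [y0 [rho [hr [hy0 hb]]]]].
  assert (ap1 : forall y, Rg y -> hnorm y < rho -> forall e, 0 < e -> exists u, D u /\ hnorm u <= 2 * INR N /\
      hnorm (hsub y (S u)) < e).
  { intros y hy hny e he.
    destruct (hb y0 hy0) as [_ h0]. replace (hsub y0 y0) with (@hzero H) by vec. rewrite hnorm_hzero. exact hr.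
    assert (Rg (hadd y0 y)) by (apply Rg_add; auto).
    destruct (hb (hadd y0 y) H0) as [_ h1]. replace (hsub (hadd y0 y) y0) with y by vec. exact hny.
    destruct (h0 (e/2) ltac:(lra)) as [u2 [hu2 [hn2 he2]]].
    destruct (h1 (e/2) ltac:(lra)) as [u1 [hu1 [hn1 he1]]].
    destruct (Dsub u1 u2 hu1 hu2) as [hd hs].
    exists (hsub u1 u2). split; auto. split. pose proof (hnorm_sub_le u1 u2). lra.
    rewrite hs. replace (hsub y (hsub (S u1) (S u2))) with (hsub (hsub (hadd y0 y) (S u1)) (hsub y0 (S u2))) by vec.
    pose proof (hnorm_sub_le (hsub (hadd y0 y) (S u1)) (hsub y0 (S u2))). lra. }
  exists (4 * INR N / rho). pose proof (pos_INR N). split. apply Rmult_le_pos. lra. left; apply Rinv_0_lt_compat; lra.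
  intros y hy. destruct (Req_dec (hnorm y) 0) as [h0|h0].
  - apply hnorm_zero_eq in h0. subst y. exists hzero. split; auto. rewrite S0, hnorm_hzero.
    replace (hsub hzero hzero) with (@hzero H) by vec. rewrite hnorm_hzero. lra.
  - pose proof (hnorm_nonneg y). set (c := rho / (2 * hnorm y)).
    assert (hc : 0 < c) by (unfold c; apply Rdiv_lt_0_compat; lra).
    assert (Rg (hscal (RC c) y)) by (apply Rg_scal; auto).
    destruct (ap1 _ H2) with (e := rho / 4) as [u' [hu' [hn' he']]].
    { rewrite hnorm_scal, Cabs_RC, Rabs_right by lra. unfold c. field_simplify; lra. }
    lra.
    destruct (Dscal (RC (/ c)) u' hu') as [hd hs].
    exists (hscal (RC (/ c)) u'). split; auto. split.
    + rewrite hnorm_scal, Cabs_RC, Rabs_right by (left; apply Rinv_0_lt_compat; lra).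
      replace (4 * INR N / rho * hnorm y) with (/ c * (2 * INR N)) by (unfold c; field; lra).
      apply Rmult_le_compat_l. left; apply Rinv_0_lt_compat; lra. exact hn'.
    + rewrite hs. replace (hsub y (hscal (RC (/ c)) (S u'))) with (hscal (RC (/ c)) (hsub (hscal (RC c) y) (S u')))
        by (unfold RC; vecf; lra).
      rewrite hnorm_scal, Cabs_RC, Rabs_right by (left; apply Rinv_0_lt_compat; lra).
      replace (hnorm y / 2) with (/ c * (rho / 4)) by (unfold c; field; lra).
      apply Rmult_le_compat_l. left; apply Rinv_0_lt_compat; lra. lra.
Qed.

Lemma open_mapping : exists L, 0 < L /\ forall y, Rg y -> exists u, D u /\ S u = y /\ hnorm u <= L * hnorm y.
Proof.
  destruct approx2 as [L1 [hL1 hap]].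
  destruct (choose_fun (fun r u => Rg r -> D u /\ hnorm u <= L1 * hnorm r /\ hnorm (hsub r (S u)) <= hnorm r / 2)) as [G hG].
  { intro r. destruct (classic (Rg r)) as [h|h]. destruct (hap r h) as [u hu]. exists u. auto.
    exists hzero. intro; contradiction. }
  exists (2 * L1 + 1). split. lra.
  intros y hy. set (U := iter_seq (fun _ V => hadd V (G (hsub y (S V)))) hzero).
  pose proof (hnorm_nonneg y) as hy0.
  assert (inv : forall m, D (U m) /\ hnorm (hsub y (S (U m))) <= (/2)^m * hnorm y).
  { induction m. change (U 0%nat) with (@hzero H). split; auto. rewrite S0. replace (hsub y hzero) with y by vec. simpl; lra.
    destruct IHm as [hD hn]. assert (hr : Rg (hsub y (S (U m)))).
    { apply Rg_hsub; auto. apply Rg_S; auto. }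
    destruct (hG _ hr) as [hDu [hnu hres]]. 
    change (U (Datatypes.S m)) with (hadd (U m) (G (hsub y (S (U m))))).
    destruct (Dadd _ _ hD hDu) as [hD2 hS2]. split; auto. rewrite hS2.
    replace (hsub y (hadd (S (U m)) (S (G (hsub y (S (U m))))))) with
      (hsub (hsub y (S (U m))) (S (G (hsub y (S (U m)))))) by vec.
    replace ((/2)^(Datatypes.S m)) with (/2 * (/2)^m) by reflexivity. lra. }
  assert (incr : forall m, hnorm (hsub (U (Datatypes.S m)) (U m)) <= L1 * ((/2)^m * hnorm y)).
  { intro m. destruct (inv m) as [hD hn]. assert (hr : Rg (hsub y (S (U m)))).
    { apply Rg_hsub; auto. apply Rg_S; auto. }
    destruct (hG _ hr) as [hDu [hnu hres]].
    change (U (Datatypes.S m)) with (hadd (U m) (G (hsub y (S (U m))))).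
    replace (hsub (hadd (U m) (G (hsub y (S (U m))))) (U m)) with (G (hsub y (S (U m)))) by vec.
    apply Rle_trans with (1 := hnu). apply Rmult_le_compat_l; auto. }
  assert (chain : forall j m, hnorm (hsub (U (m + j)%nat) (U m)) <= 2 * L1 * hnorm y * ((/2)^m - (/2)^(m+j))).
  { induction j; intro m.
    - replace (m + 0)%nat with m by lia. replace (hsub (U m) (U m)) with (@hzero H) by vec.
      rewrite hnorm_hzero. lra.
    - replace (m + Datatypes.S j)%nat with (Datatypes.S (m + j)) by lia.
      pose proof (hnorm_tri_sub (U (Datatypes.S (m + j))) (U (m + j)%nat) (U m)).
      specialize (IHj m). specialize (incr (m + j)%nat).
      replace ((/2)^(Datatypes.S (m + j))) with (/2 * (/2)^(m+j)) by reflexivity.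
      assert (0 <= L1 * hnorm y) by (apply Rmult_le_pos; auto).
      replace (L1 * ((/2)^(m+j) * hnorm y)) with ((L1 * hnorm y) * (/2)^(m+j)) in incr by ring.
      nra. }
  assert (hc : hcauchy U).
  { apply (cauchy_geom U (2 * L1 * hnorm y) (/2)). lra. intros m j. specialize (chain j m).
    assert (0 <= (/2)^(m+j)) by (apply pow_le; lra). assert (0 <= 2 * L1 * hnorm y) by (apply Rmult_le_pos; [lra|auto]).
    nra. }
  destruct (complete H U hc) as [x hx].
  assert (hSx : hconverges (fun k => S (U k)) y).
  { intros e he. destruct (Req_dec (hnorm y) 0) as [h0|h0].
    - exists 0%nat. intros k _. destruct (inv k) as [_ hn]. rewrite hnorm_sub_sym. rewrite h0 in hn. lra.
    - destruct (pow_lt_1_zero (/2) ltac:(rewrite Rabs_right; lra) (e / hnorm y)) as [N hN].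
      apply Rdiv_lt_0_compat; lra.
      exists N. intros k hk. specialize (hN k hk). rewrite Rabs_right in hN by (apply Rle_ge, pow_le; lra).
      destruct (inv k) as [_ hn]. rewrite hnorm_sub_sym.
      apply Rle_lt_trans with (1 := hn). replace e with (e / hnorm y * hnorm y) by (field; lra).
      apply Rmult_lt_compat_r; lra. }
  destruct (Sclosed U x y (fun k => proj1 (inv k)) hx hSx) as [hDx hSx'].
  exists x. split; auto. split; auto.
  assert (hnorm x <= 2 * L1 * hnorm y).
  { apply (conv_norm_bound U x _ 0%nat hx). intros k _. specialize (chain k 0%nat). simpl in chain. change (U 0%nat) with (@hzero H) in chain.
    replace (hsub (U k) hzero) with (U k) in chain by vec.
    assert (0 <= (/2)^k) by (apply pow_le; lra). assert (0 <= 2 * L1 * hnorm y) by (apply Rmult_le_pos; [lra|auto]).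
    nra. }
  nra.
Qed.
End OM.

Open Scope R_scope.

Lemma Rabs_le_inv x a : Rabs x <= a -> -a <= x <= a.
Proof. intro h. unfold Rabs in h. destruct (Rcase_abs x); lra. Qed.

Lemma case1_arith (s C0 t e d M q1 q2 p1 p2 g1 g2 nu : R) :
  (s = 1 \/ s = -1) -> 1 <= C0 -> 0 < t -> t * (4 * C0) <= 1 -> t <= e / 8 -> d * (16 * C0) = t * t ->
  Rabs q1 <= d -> Rabs q2 <= d -> (p1 + 1) * (p1 + 1) + p2 * p2 <= t * t / 4 ->
  Rabs g1 <= C0 -> Rabs g2 <= C0 -> 0 <= nu <= C0 * C0 ->
  let R1 := q1 + s * t * p2 + t * t * g1 in
  let I1 := q2 - s * t * p1 + s * t + t * t * g2 in
  let N1 := 1 + t * t * nu + 2 * (s * t * g2) in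
  / 2 <= N1 <= 2 /\ t <= s * I1 /\ R1 <= t * t * (C0 + 1) /\ Rabs I1 <= 3 * t /\
  2 * R1 < (8 * C0 + 9) * (I1 * I1) /\ R1 <= t.
Proof.
  intros hs hC ht htC hte hd hq1 hq2 hp hg1 hg2 hnu R1 I1 N1.
  assert (hs2 : s * s = 1) by (destruct hs; subst; lra).
  assert (hsa : Rabs s = 1) by (destruct hs; subst; [apply Rabs_R1| rewrite Rabs_left; lra]).
  apply Rabs_le_inv in hq1, hq2, hg1, hg2.
  assert (hd0 : 0 <= d) by lra.
  assert (hdt : d <= t * t / 16).
  { assert (d * 16 <= d * (16 * C0)) by nra. lra. }
  assert (htC' : t * C0 <= / 4) by lra.
  assert (ht1 : t <= / 4) by nra.
  assert (hp2s : p2 * p2 <= (t/2) * (t/2)) by (pose proof (pow2_ge_0 (p1 + 1)); nra).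
  assert (hp1s : (p1 + 1) * (p1 + 1) <= (t/2) * (t/2)) by (pose proof (pow2_ge_0 p2); nra).
  assert (hp2 : - (t/2) <= p2 <= t / 2) by (split; nra).
  assert (hp1 : - (t/2) <= p1 + 1 <= t / 2) by (split; nra).
  assert (hsg2 : - C0 <= s * g2 <= C0) by (destruct hs; subst; lra).
  assert (hsp2 : - (t/2) <= s * p2 <= t / 2) by (destruct hs; subst; lra).
  assert (hsq2 : - d <= s * q2 <= d) by (destruct hs; subst; lra).
  assert (hN : / 2 <= N1 <= 2).
  { unfold N1. assert (0 <= t * t * nu) by (apply Rmult_le_pos; nra).
    assert (t * t * nu <= (t * C0) * (t * C0)) by nra.
    assert (hu0 : 0 <= t * C0) by nra.
    assert ((t * C0) * (t * C0) <= /16) by nra.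
    assert (- (t * C0) <= s * t * g2 <= t * C0).
    { replace (s * t * g2) with (t * (s * g2)) by ring. split; nra. }
    lra. }
  assert (hI : t <= s * I1).
  { unfold I1. replace (s * (q2 - s * t * p1 + s * t + t * t * g2)) with
      (s * q2 + (s * s) * t * (1 - p1) + t * t * (s * g2)) by ring. rewrite hs2.
    assert (t * t * (s * g2) >= - (t * t * C0)) by nra.
    assert (t * t * C0 <= t / 4) by nra.
    assert (t * (1 - p1) >= t * (2 - t / 2)) by nra.
    assert (t * t <= t / 4) by nra. lra. }
  assert (hR : R1 <= t * t * (C0 + 1)).
  { unfold R1. replace (s * t * p2) with (t * (s * p2)) by ring.
    assert (t * (s * p2) <= t * (t / 2)) by nra. assert (t * t * g1 <= t * t * C0) by nra. nra. }
  assert (hIabs : Rabs I1 <= 3 * t).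
  { unfold I1. apply Rabs_le. split.
    - assert (s * t * (1 - p1) >= - (t * (2 + t/2))).
      { destruct hs; subst; nra. }
      assert (t * t * g2 >= - (t * t * C0)) by nra. assert (t * t * C0 <= t / 4) by nra. nra.
    - assert (s * t * (1 - p1) <= t * (2 + t/2)).
      { destruct hs; subst; nra. }
      assert (t * t * g2 <= t * t * C0) by nra. assert (t * t * C0 <= t / 4) by nra. nra. }
  split; auto. split; auto. split; auto. split; auto. split.
  - assert (t * t <= I1 * I1).
    { assert (t <= Rabs I1). { apply Rle_trans with (s * I1). auto. 
        replace (s * I1) with (Rabs (s * I1)) by (rewrite Rabs_right; lra). rewrite Rabs_mult, hsa. lra. }
      pose proof (Rabs_pos I1). replace (I1 * I1) with (Rabs I1 * Rabs I1) by (rewrite <- Rabs_mult; apply Rabs_right; nra).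
      nra. }
    assert (0 < t * t) by nra.
    assert (2 * R1 <= 2 * t * t * (C0 + 1)) by lra.
    assert ((8 * C0 + 9) * (t * t) <= (8 * C0 + 9) * (I1 * I1)) by (apply Rmult_le_compat_l; lra).
    nra.
  - assert (t * t * (C0 + 1) <= t) by nra. lra.
Qed.

Open Scope R_scope.

Section Core.
Context {H : Hilbert}.
Variable D : H -> Prop.
Variable S : H -> H.
Hypothesis D0 : D hzero.
Hypothesis Dadd : forall f g, D f -> D g -> D (hadd f g) /\ S (hadd f g) = hadd (S f) (S g).
Hypothesis Dscal : forall a f, D f -> D (hscal a f) /\ S (hscal a f) = hscal a (S f).
Hypothesis Sclosed : forall (u : nat -> H) x y, (forall k, D (u k)) -> hconverges u x ->
   hconverges (fun k => S (u k)) y -> D x /\ S x = y.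
Hypothesis Rg_closed : hclosed_set (Rg D S).
Hypothesis Acc : forall f, D f -> 0 <= Cre (inner (S f) f).
Hypothesis Surj1 : forall x, exists g, D g /\ hadd (S g) g = x.

Definition Q (f : H) : Cplx := inner (S f) f.

Lemma inner_rg_zero k r : (forall r', Rg D S r' -> inner k r' = C0) -> Rg D S r -> inner r k = C0.
Proof. intros h hr. rewrite inner_conj, (h r hr). csolve. Qed.

Lemma perp_ker x : (forall k, Rg D S k -> inner x k = C0) -> D x /\ S x = hzero.
Proof.
  intro hperp. destruct (Surj1 x) as [g [hg e]].
  assert (hSg : Rg D S (S g)) by (exists g; auto).
  assert (e1 : inner g x = RC (nn x)).
  { rewrite <- inner_self. rewrite <- e at 2. rewrite inner_addl.
    rewrite (inner_rg_zero x (S g) hperp hSg). csolve. }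
  assert (e2 : inner x g = RC (nn x)).
  { rewrite inner_conj, e1. unfold RC, Cconj; simpl. apply Ceq; simpl; ring. }
  assert (e3 : nn x = Cre (Q g) + nn g).
  { assert (E: inner x g = Cadd (Q g) (inner g g)) by (rewrite <- e at 1; rewrite inner_addl; reflexivity).
    rewrite e2 in E. apply (f_equal Cre) in E. simpl in E. unfold nn in *. lra. }
  pose proof (Acc g hg) as hq. fold (Q g) in hq.
  pose proof (inner_abs_bound g x) as hb. rewrite e1, Cabs_RC in hb.
  pose proof (nn_nonneg x). rewrite Rabs_right in hb by lra.
  pose proof (hnorm_sq x). pose proof (hnorm_sq g). pose proof (hnorm_nonneg x). pose proof (hnorm_nonneg g).
  assert (hgx : nn g = nn x).
  { destruct (Req_dec (hnorm x) 0) as [h0|h0]. rewrite h0 in H1. nra.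
    assert (hnorm x <= hnorm g) by nra. nra. }
  assert (hz : nn (hsub x g) = 0) by (rewrite nn_sub, e2; simpl; lra).
  apply nn_zero in hz. assert (xg : x = g).
  { replace x with (hadd (hsub x g) g) by vec. rewrite hz. apply hadd_zero_l. }
  rewrite xg in e |- *. split; auto. replace (S g) with (hsub (hadd (S g) g) g) by vec. rewrite e. vec.
Qed.

Lemma decomp f : D f -> exists p k, Rg D S p /\ D p /\ D k /\ S k = hzero /\ f = hadd p k /\
  (forall r, Rg D S r -> inner k r = C0) /\ Q f = Q p.
Proof.
  intro hf. destruct (projection (Rg D S) (Rg_sub D S D0 Dadd Dscal) Rg_closed f) as [p [hp hperp]].
  set (k := hsub f p). destruct (perp_ker k hperp) as [hk hSk].
  assert (fe : f = hadd p k) by (unfold k; vec).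
  assert (pe : p = hsub f k) by (unfold k; vec).
  assert (hDp : D p) by (rewrite pe; apply (Dsub D S Dadd Dscal); auto).
  exists p, k. repeat split; auto.
  unfold Q. rewrite fe. destruct (Dadd p k hDp hk) as [_ ->]. rewrite hSk, hadd_zero, inner_addr.
  assert (inner (S p) k = C0) by (apply inner_rg_zero; auto; exists p; auto).
  rewrite H0. destruct (inner (S p) p). csolve.
Qed.

Lemma Q_scal_real c v : D v -> Q (hscal (RC c) v) = mkC (c * c * Cre (Q v)) (c * c * Cim (Q v)).
Proof. intro hv. unfold Q. destruct (Dscal (RC c) v hv) as [_ ->]. rewrite inner_scall, inner_scalr.
  destruct (inner (S v) v). unfold RC; apply Ceq; simpl; ring. Qed.

Lemma normalize v : D v -> 0 < nn v -> exists v', D v' /\ hnorm v' = 1 /\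
  Cre (Q v') = Cre (Q v) / nn v /\ Cim (Q v') = Cim (Q v) / nn v.
Proof. intros hv hn. pose proof (hnorm_sq v) as hs. pose proof (hnorm_nonneg v).
  assert (hp : 0 < hnorm v) by nra.
  exists (hscal (RC (/ hnorm v)) v). split. apply Dscal; auto. split.
  - rewrite hnorm_scal, Cabs_RC, Rabs_right. field; lra. left; apply Rinv_0_lt_compat; lra.
  - rewrite Q_scal_real by auto. simpl. rewrite <- hs. split; field; lra.
Qed.

Lemma Qpert g u x1 x2 : D g -> D u -> S u = g -> nn g = 1 ->
  D (hadd g (hscal (mkC x1 x2) u)) /\
  Q (hadd g (hscal (mkC x1 x2) u)) = mkC
    (Cre (Q g) + x1 * Cre (inner (S g) u) + x2 * Cim (inner (S g) u) + x1 + (x1 * x1 + x2 * x2) * Cre (inner g u))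
    (Cim (Q g) + x1 * Cim (inner (S g) u) - x2 * Cre (inner (S g) u) + x2 + (x1 * x1 + x2 * x2) * Cim (inner g u)) /\
  nn (hadd g (hscal (mkC x1 x2) u)) = 1 + (x1 * x1 + x2 * x2) * nn u + 2 * (x1 * Cre (inner g u) + x2 * Cim (inner g u)).
Proof.
  intros hg hu hSu hn. destruct (Dscal (mkC x1 x2) u hu) as [hd1 hs1]. destruct (Dadd _ _ hg hd1) as [hd2 hs2].
  split; auto. split.
  - unfold Q. rewrite hs2, hs1, hSu. rewrite !inner_addl, !inner_addr, !inner_scall, !inner_scalr.
    rewrite (inner_self g), hn. fold (Q g).
    destruct (Q g), (inner (S g) u), (inner g u). apply Ceq; unfold RC; simpl; ring.
  - rewrite nn_add, nn_scal, inner_scalr, hn. unfold Cn2. simpl. ring.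
Qed.

Variable sg : R.
Hypothesis hsg : sg = 1 \/ sg = -1.
Hypothesis Curv : forall M, exists eps, 0 < eps /\ forall f, D f -> hnorm f = 1 -> Cabs (Q f) <= eps ->
   0 < sg * Cim (Q f) -> M * (Cim (Q f) * Cim (Q f)) <= Cre (Q f).

Lemma case1 : (forall d, 0 < d -> exists g, Rg D S g /\ D g /\ hnorm g = 1 /\ Cabs (Q g) < d) -> False.
Proof.
  intro hcase.
  destruct (open_mapping D S D0 Dadd Dscal Sclosed Rg_closed) as [L [hL hom]].
  set (C0 := L + 1).
  destruct (Curv (8 * C0 + 9)) as [eps [heps hcurv]].
  set (t := Rmin (/ (4 * C0)) (eps / 8)).
  assert (ht : 0 < t) by (apply Rmin_glb_lt; [apply Rinv_0_lt_compat; unfold C0; lra| lra]).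
  assert (htC : t * (4 * C0) <= 1).
  { pose proof (Rmin_l (/ (4 * C0)) (eps / 8)). fold t in H0.
    replace 1 with (/ (4 * C0) * (4 * C0)) by (field; unfold C0; lra).
    apply Rmult_le_compat_r. unfold C0; lra. exact H0. }
  assert (hte : t <= eps / 8) by apply Rmin_r.
  set (d := t * t / (16 * C0)).
  assert (hd : d * (16 * C0) = t * t) by (unfold d; field; unfold C0; lra).
  assert (hd0 : 0 < d) by (unfold d; apply Rdiv_lt_0_compat; [nra | unfold C0; lra]).
  destruct (hcase d hd0) as [g [hRg [hDg [hg1 hQg]]]].
  destruct (hom g hRg) as [u [hDu [hSu hnu]]]. rewrite hg1 in hnu.
  assert (hnu' : hnorm u <= C0) by (unfold C0; lra).
  assert (hng : nn g = 1) by (rewrite <- hnorm_sq, hg1; ring).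
  set (p1 := Cre (inner (S g) u)). set (p2 := Cim (inner (S g) u)).
  set (g1 := Cre (inner g u)). set (g2 := Cim (inner g u)).
  set (q1 := Cre (Q g)). set (q2 := Cim (Q g)).
  assert (hq1 : Rabs q1 <= d) by (pose proof (Cre_le_Cabs (Q g)); unfold q1; lra).
  assert (hq2 : Rabs q2 <= d) by (pose proof (Cim_le_Cabs (Q g)); unfold q2; lra).
  assert (hgb : Cabs (inner g u) <= C0).
  { pose proof (inner_abs_bound g u). rewrite hg1 in H0. lra. }
  assert (hg1b : Rabs g1 <= C0) by (pose proof (Cre_le_Cabs (inner g u)); unfold g1; lra).
  assert (hg2b : Rabs g2 <= C0) by (pose proof (Cim_le_Cabs (inner g u)); unfold g2; lra).
  assert (hnub : 0 <= nn u <= C0 * C0).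
  { split. apply nn_nonneg. rewrite <- hnorm_sq. pose proof (hnorm_nonneg u). nra. }
  assert (hC : 1 <= C0) by (unfold C0; lra).
  assert (hA : (p1 + 1) * (p1 + 1) + p2 * p2 <= t * t / 4).
  { set (t' := / (2 * C0)). set (A := (p1 + 1) * (p1 + 1) + p2 * p2).
    destruct (Qpert g u (- t' * (p1 + 1)) (- t' * p2) hDg hDu hSu hng) as [hDv [hQv _]].
    pose proof (Acc _ hDv) as hacc. fold (Q (hadd g (hscal (mkC (- t' * (p1 + 1)) (- t' * p2)) u))) in hacc.
    rewrite hQv in hacc. simpl in hacc. fold p1 p2 g1 q1 in hacc.
    assert (e1 : q1 + - t' * (p1 + 1) * p1 + - t' * p2 * p2 + - t' * (p1 + 1) +
        (- t' * (p1 + 1) * (- t' * (p1 + 1)) + - t' * p2 * (- t' * p2)) * g1 = q1 - t' * A + t' * t' * A * g1)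
      by (unfold A; ring).
    rewrite e1 in hacc.
    assert (hA0 : 0 <= A) by (unfold A; pose proof (pow2_ge_0 (p1+1)); pose proof (pow2_ge_0 p2); nra).
    assert (ht' : t' * (2 * C0) = 1) by (unfold t'; field; lra).
    assert (t' * t' * A * g1 <= t' * t' * A * C0).
    { apply Rmult_le_compat_l. pose proof (pow2_ge_0 t'). nra. apply Rabs_le_inv in hg1b. lra. }
    apply Rabs_le_inv in hq1.
    assert (A * (t' - t' * t' * C0) <= d) by nra.
    assert (t' - t' * t' * C0 = t' / 2) by (field_simplify; nra).
    assert (A * t' <= 2 * d) by nra.
    assert (A * 1 <= 2 * d * (2 * C0)) by (rewrite <- ht'; nra).
    nra. }
  pose proof (case1_arith sg C0 t eps d (8 * C0 + 9) q1 q2 p1 p2 g1 g2 (nn u) hsg hC ht htC hte hd hq1 hq2 hA hg1b hg2b hnub)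
    as [hN [hI [hR [hIa [hM hRt]]]]].
  destruct (Qpert g u 0 (sg * t) hDg hDu hSu hng) as [hDv [hQv hnv]].
  set (v := hadd g (hscal (mkC 0 (sg * t)) u)) in *.
  assert (hnv' : nn v = 1 + t * t * nn u + 2 * (sg * t * g2)).
  { rewrite hnv. fold g1 g2. destruct hsg; subst sg; ring. }
  assert (hRv : Cre (Q v) = q1 + sg * t * p2 + t * t * g1).
  { rewrite hQv. simpl. fold p1 p2 g1 q1. destruct hsg; subst sg; ring. }
  assert (hIv : Cim (Q v) = q2 - sg * t * p1 + sg * t + t * t * g2).
  { rewrite hQv. simpl. fold p1 p2 g2 q2. destruct hsg; subst sg; ring. }
  rewrite <- hnv', <- hRv, <- hIv in *.
  pose proof (Acc v hDv) as hR0. fold (Q v) in hR0.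
  assert (hNp : 0 < nn v) by lra.
  destruct (normalize v hDv hNp) as [v' [hDv' [hv1 [hre him]]]].
  assert (hsI : 0 < sg * Cim (Q v)) by lra.
  assert (hab : Cabs (Q v') <= eps).
  { pose proof (Cabs_le_sum (Q v')). rewrite hre, him in H0.
    rewrite Rabs_right in H0. 2: { apply Rle_ge. unfold Rdiv; apply Rmult_le_pos; [lra | left; apply Rinv_0_lt_compat; lra]. }
    unfold Rdiv in H0. rewrite Rabs_mult, (Rabs_right (/ nn v)) in H0 by (left; apply Rinv_0_lt_compat; lra).
    assert (/ nn v <= 2). { replace 2 with (/ / 2) by (field). apply Rinv_le_contravar; lra. }
    assert (0 < / nn v) by (apply Rinv_0_lt_compat; lra).
    assert (Cre (Q v) * / nn v + Rabs (Cim (Q v)) * / nn v <= (t + 3 * t) * 2) by nra.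
    lra. }
  assert (hsv : 0 < sg * Cim (Q v')).
  { rewrite him. unfold Rdiv. replace (sg * (Cim (Q v) * / nn v)) with ((sg * Cim (Q v)) * / nn v) by ring.
    apply Rmult_lt_0_compat; auto. apply Rinv_0_lt_compat; lra. }
  specialize (hcurv v' hDv' hv1 hab hsv). rewrite hre, him in hcurv.
  assert ((8 * C0 + 9) * (Cim (Q v) * Cim (Q v)) <= Cre (Q v) * nn v).
  { assert ((8 * C0 + 9) * (Cim (Q v) / nn v * (Cim (Q v) / nn v)) * (nn v * nn v) <= Cre (Q v) / nn v * (nn v * nn v)).
    { apply Rmult_le_compat_r. nra. exact hcurv. }
    replace ((8 * C0 + 9) * (Cim (Q v) / nn v * (Cim (Q v) / nn v)) * (nn v * nn v)) with
      ((8 * C0 + 9) * (Cim (Q v) * Cim (Q v))) in H0 by (field; lra).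
    replace (Cre (Q v) / nn v * (nn v * nn v)) with (Cre (Q v) * nn v) in H0 by (field; lra). exact H0. }
  assert (Cre (Q v) * nn v <= 2 * Cre (Q v)) by nra.
  lra.
Qed.

Hypothesis Wclose : forall del, 0 < del -> exists f, D f /\ hnorm f = 1 /\ Cabs (Q f) < del.
Hypothesis NonCorner : forall ka, 0 < ka -> exists f, D f /\ hnorm f = 1 /\ Cre (Q f) < ka * (sg * Cim (Q f)).

Lemma core_false : False.
Proof.
  destruct (classic (forall d, 0 < d -> exists g, Rg D S g /\ D g /\ hnorm g = 1 /\ Cabs (Q g) < d)) as [h|h].
  { exact (case1 h). }
  assert (hd : exists d, 0 < d /\ forall g, Rg D S g -> D g -> hnorm g = 1 -> d <= Cabs (Q g)).
  { apply NNPP. intro hn. apply h. intros d hd0. apply NNPP. intro hn2. apply hn. exists d. split; auto.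
    intros g hR hD h1. apply Rnot_lt_le. intro hl. apply hn2. exists g. auto. }
  destruct hd as [d [hd0 hdq]].
  destruct (Wclose d hd0) as [f [hDf [hf1 hQf]]].
  destruct (decomp f hDf) as [p [k [hRp [hDp [hDk [hSk [fe [hkperp hQ]]]]]]]].
  destruct (Req_dec (hnorm k) 0) as [hk0|hk0].
  { apply hnorm_zero_eq in hk0. rewrite hk0, hadd_zero in fe. subst f.
    specialize (hdq p hRp hDp hf1). lra. }
  pose proof (hnorm_nonneg k).
  set (a := hscal (RC (/ hnorm k)) k).
  destruct (Dscal (RC (/ hnorm k)) k hDk) as [hDa hSa]. fold a in hDa, hSa. rewrite hSk, hscal_zero in hSa.
  assert (ha1 : hnorm a = 1).
  { unfold a. rewrite hnorm_scal, Cabs_RC, Rabs_right. field; lra. left; apply Rinv_0_lt_compat; lra. }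
  assert (haperp : forall r, Rg D S r -> inner a r = C0).
  { intros r hr. unfold a. rewrite inner_scall, (hkperp r hr). csolve. }
  destruct (Curv 1) as [eps [heps hcurv]].
  set (e := Rmin eps (Rmin d 1)).
  assert (he0 : 0 < e) by (apply Rmin_glb_lt; auto; apply Rmin_glb_lt; lra).
  assert (hee : e <= eps) by apply Rmin_l.
  assert (hed : e <= d) by (eapply Rle_trans; [apply Rmin_r| apply Rmin_l]).
  assert (he1 : e <= 1) by (eapply Rle_trans; [apply Rmin_r| apply Rmin_r]).
  set (ka := e / 8).
  destruct (NonCorner ka ltac:(unfold ka; lra)) as [f' [hDf' [hf1' hQf']]].
  destruct (decomp f' hDf') as [p' [k' [hRp' [hDp' [hDk' [hSk' [fe' [hkperp' hQ']]]]]]]].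
  rewrite hQ' in hQf'.
  assert (hnp : 0 < nn p').
  { pose proof (nn_nonneg p'). destruct (Req_dec (nn p') 0) as [h0|h0]; [|lra].
    apply nn_zero in h0. rewrite h0 in hQf'. unfold Q in hQf'. rewrite (S0 D S D0 Dscal), inner_zero_l in hQf'.
    simpl in hQf'. lra. }
  pose proof (hnorm_sq p') as hsq. pose proof (hnorm_nonneg p').
  assert (hpp : 0 < hnorm p') by nra.
  set (gm := hscal (RC (/ hnorm p')) p').
  assert (hDg : D gm) by (apply Dscal; auto).
  assert (hRg : Rg D S gm) by (apply Rg_scal; auto).
  assert (hg1 : hnorm gm = 1).
  { unfold gm. rewrite hnorm_scal, Cabs_RC, Rabs_right. field; lra. left; apply Rinv_0_lt_compat; lra. }
  assert (hQg : Q gm = mkC (Cre (Q p') / nn p') (Cim (Q p') / nn p')).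
  { unfold gm. rewrite Q_scal_real by auto. rewrite <- hsq. apply Ceq; simpl; field; lra. }
  set (w1 := Cre (Q gm)). set (w2 := Cim (Q gm)).
  assert (hw : w1 < ka * (sg * w2)).
  { unfold w1, w2. rewrite hQg. simpl. unfold Rdiv.
    replace (ka * (sg * (Cim (Q p') * / nn p'))) with (ka * (sg * Cim (Q p')) * / nn p') by ring.
    apply Rmult_lt_compat_r. apply Rinv_0_lt_compat; lra. exact hQf'. }
  assert (hw1 : 0 <= w1) by (apply Acc; auto).
  assert (hsw2 : 0 < sg * w2).
  { assert (hk1 : 0 < ka * (sg * w2)) by lra. assert (hk2 : 0 < ka) by (unfold ka; lra).
    apply (Rmult_lt_reg_l ka); lra. }
  assert (hcq : d <= Cabs (Q gm)) by (apply hdq; auto).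
  set (cq := Cabs (Q gm)) in *.
  assert (hcq0 : 0 < cq) by lra.
  set (r := e / (2 * cq)).
  assert (hr0 : 0 < r) by (unfold r; apply Rdiv_lt_0_compat; lra).
  assert (hr1 : r <= / 2).
  { unfold r. apply (Rmult_le_reg_r (2 * cq)). lra. field_simplify; lra. }
  set (c1 := sqrt (1 - r)). set (c2 := sqrt r).
  assert (hc1 : c1 * c1 = 1 - r) by (apply sqrt_sqrt; lra).
  assert (hc2 : c2 * c2 = r) by (apply sqrt_sqrt; lra).
  set (v := hadd (hscal (RC c1) a) (hscal (RC c2) gm)).
  destruct (Dscal (RC c1) a hDa) as [hD1 hS1]. destruct (Dscal (RC c2) gm hDg) as [hD2 hS2].
  destruct (Dadd _ _ hD1 hD2) as [hDv hSv]. fold v in hDv, hSv.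
  rewrite hS1, hS2, hSa, hscal_zero, hadd_zero_l in hSv.
  assert (hag : inner a gm = C0) by (apply haperp; auto).
  assert (hga : inner (S gm) a = C0) by (apply (inner_rg_zero a); auto; apply Rg_S; auto).
  assert (hnv : nn v = 1).
  { unfold v. rewrite nn_add, !nn_scal, inner_scall, inner_scalr, hag.
    rewrite <- (hnorm_sq a), <- (hnorm_sq gm), ha1, hg1. unfold Cn2, RC; simpl. nra. }
  assert (hv1 : hnorm v = 1) by (rewrite hnorm_nn, hnv; apply sqrt_1).
  assert (hQv : Q v = mkC (r * w1) (r * w2)).
  { unfold Q. rewrite hSv. unfold v. rewrite inner_addr, !inner_scall, !inner_scalr, hga. fold (Q gm).
    unfold w1, w2. destruct (Q gm). apply Ceq; unfold RC; simpl; nra. }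
  assert (hcv : Cabs (Q v) <= eps).
  { replace (Q v) with (Cmul (RC r) (Q gm)) by (rewrite hQv; unfold w1, w2; destruct (Q gm); apply Ceq; unfold RC; simpl; ring).
    rewrite Cabs_mul, Cabs_RC, Rabs_right by lra. fold cq. unfold r. field_simplify; lra. }
  assert (hsv : 0 < sg * Cim (Q v)) by (rewrite hQv; simpl; nra).
  specialize (hcurv v hDv hv1 hcv hsv). rewrite hQv in hcurv. simpl in hcurv.
  assert (hsq2 : w2 * w2 = (sg * w2) * (sg * w2)) by (destruct hsg; subst sg; ring).
  assert (h1 : r * (sg * w2) * (sg * w2) <= w1) by nra.
  assert (h2 : r * (sg * w2) < ka) by nra.
  assert (h3 : cq <= w1 + sg * w2).
  { unfold cq. pose proof (Cabs_le_sum (Q gm)) as hcs. fold w1 w2 in hcs. rewrite (Rabs_right w1) in hcs by lra.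
    replace (Rabs w2) with (sg * w2) in hcs by (destruct hsg; subst sg; [rewrite Rabs_right| rewrite Rabs_left]; lra).
    lra. }
  assert (h4 : r * cq <= r * (ka + 1) * (sg * w2)) by nra.
  assert (h5 : r * cq = e / 2) by (unfold r; field; lra).
  unfold ka in *. nra.
Qed.
End Core.

Open Scope R_scope.

Lemma closure_incl X z : X z -> Cclosure X z.
Proof. intros hz e he. exists z. split; auto. replace (Csub z z) with C0 by csolve.
  unfold Cabs, C0; simpl. replace (0*0+0*0) with 0 by ring. rewrite sqrt_0. lra. Qed.

Lemma closure_closure X z : Cclosure (Cclosure X) z -> Cclosure X z.
Proof. intros hz e he. destruct (hz (e/2) ltac:(lra)) as [w [hw hzw]].
  destruct (hw (e/2) ltac:(lra)) as [w' [hw' hww']]. exists w'. split; auto.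
  replace (Csub z w') with (Cadd (Csub z w) (Csub w w')) by csolve.
  pose proof (Cabs_tri (Csub z w) (Csub w w')). lra. Qed.

Lemma unit_conj_mul n : Cabs n = 1 -> Cmul (Cconj n) n = C1.
Proof. intro h. apply Cabs_unit_n2 in h. unfold Cn2 in h. apply Ceq; simpl; lra. Qed.
Lemma unit_mul_conj n : Cabs n = 1 -> Cmul n (Cconj n) = C1.
Proof. intro h. rewrite Cmul_comm. apply unit_conj_mul; auto. Qed.

Lemma xi_eq l n z : xi_coord l n z = Cim (Cmul (Csub z l) (Cconj n)).
Proof. unfold xi_coord. destruct z, l, n. simpl. ring. Qed.
Lemma eta_eq l n z : eta_coord l n z = Cre (Cmul (Csub z l) (Cconj n)).
Proof. reflexivity. Qed.

Lemma Cabs_rot z n : Cabs n = 1 -> Cabs (Cmul z (Cconj n)) = Cabs z.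
Proof. intro h. rewrite Cabs_mul, Cabs_conj, h. ring. Qed.

Lemma boundary_proj (Om : Cplx -> Prop) l n z :
  Cabs n = 1 -> (forall w, Cclosure Om w -> Om w) ->
  (forall w, Om w -> Cre (Cmul (Csub w l) (Cconj n)) >= 0) -> Om z ->
  exists z', Cboundary Om z' /\ Cim (Cmul (Csub z' l) (Cconj n)) = Cim (Cmul (Csub z l) (Cconj n)) /\
    0 <= Cre (Cmul (Csub z' l) (Cconj n)) <= Cre (Cmul (Csub z l) (Cconj n)) /\ Cabs (Csub z' l) <= Cabs (Csub z l).
Proof.
  intros hn hcl hsup hz.
  set (pt := fun t => Csub z (Cmul (RC t) n)).
  assert (hnn : Cn2 n = 1) by (apply Cabs_unit_n2; auto).
  assert (heta : forall t, Cre (Cmul (Csub (pt t) l) (Cconj n)) = Cre (Cmul (Csub z l) (Cconj n)) - t).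
  { intro t. unfold pt. unfold Cn2 in hnn. assert (ht := f_equal (fun x => t * x) hnn). simpl in ht. destruct z, l, n; simpl in *. lra. }
  assert (hxi : forall t, Cim (Cmul (Csub (pt t) l) (Cconj n)) = Cim (Cmul (Csub z l) (Cconj n))).
  { intro t. unfold pt. destruct z, l, n; simpl in *. ring. }
  set (E := fun t => 0 <= t /\ Om (pt t)).
  set (e0 := Cre (Cmul (Csub z l) (Cconj n))).
  destruct (completeness E) as [ts [hub hlub]].
  { exists e0. intros t [ht hp]. specialize (hsup _ hp). rewrite heta in hsup. unfold e0. lra. }
  { exists 0. split. lra. unfold pt. replace (Csub z (Cmul (RC 0) n)) with z by (destruct z, n; csolve). auto. }
  assert (h0 : E 0). { split. lra. unfold pt. replace (Csub z (Cmul (RC 0) n)) with z by (destruct z, n; csolve). auto. }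
  assert (hts0 : 0 <= ts) by (apply hub; auto).
  assert (htse : ts <= e0).
  { apply hlub. intros t [ht hp]. specialize (hsup _ hp). rewrite heta in hsup. unfold e0. lra. }
  assert (hdist : forall t1 t2, Cabs (Csub (pt t1) (pt t2)) = Rabs (t2 - t1)).
  { intros t1 t2. replace (Csub (pt t1) (pt t2)) with (Cmul (RC (t2 - t1)) n) by (unfold pt; destruct z, n; csolve).
    rewrite Cabs_mul, Cabs_RC, hn. ring. }
  assert (hOm : Om (pt ts)).
  { apply hcl. intros e he. apply NNPP. intro hno.
    assert (is_upper_bound E (ts - e / 2)).
    { intros t ht. apply Rnot_lt_le. intro hlt. apply hno. exists (pt t). split. apply ht.
      rewrite hdist. pose proof (hub t ht). apply Rabs_def1; lra. }
    specialize (hlub _ H). lra. }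
  exists (pt ts). split; [split|].
  - apply closure_incl; auto.
  - intros [e [he hball]]. assert (E (ts + e / 2)).
    { split. lra. apply hball. replace (Csub (pt (ts + e / 2)) (pt ts)) with (Csub (pt (ts + e/2)) (pt ts)) by reflexivity.
      rewrite hdist. apply Rabs_def1; lra. }
    specialize (hub _ H). lra.
  - split. apply hxi. split. split. specialize (hsup _ hOm). lra. rewrite heta. fold e0. lra.
    rewrite <- (Cabs_rot (Csub (pt ts) l) n hn), <- (Cabs_rot (Csub z l) n hn).
    rewrite !Cabs_Cn2. apply sqrt_le_1_alt. unfold Cn2. rewrite heta, hxi. fold e0.
    assert (0 <= e0 - ts) by (specialize (hsup _ hOm); rewrite heta in hsup; fold e0 in hsup; lra). nra.
Qed.

Open Scope R_scope.

Section Main.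
Context {H : Hilbert}.
Variable A : Operator H.
Variables l n : Cplx.
Hypothesis hlin : linear_operator A.
Hypothesis hcl : closed_operator A.
Hypothesis hspec : forall z, spectrum A z -> Cclosure (Num A) z.
Hypothesis hbd : Cboundary (Num A) l.
Hypothesis hsupp : supporting_normal (Cclosure (Num A)) l n.
Hypothesis hnc : ~ corner_point (Cclosure (Num A)) l.
Hypothesis hRc : hclosed_set (range (shift A l)).

Definition Tm (f : H) : H := hsub (app A f) (hscal l f).
Definition Sm (f : H) : H := hscal (Cconj n) (Tm f).

Lemma hn1 : Cabs n = 1. Proof. apply hsupp. Qed.
Lemma hsup' : forall z, Cclosure (Num A) z -> Cre (Cmul (Csub z l) (Cconj n)) >= 0. Proof. apply hsupp. Qed.

Lemma mD0 : dom A hzero. Proof. apply hlin. Qed.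
Lemma mDadd f g : dom A f -> dom A g -> dom A (hadd f g) /\ Sm (hadd f g) = hadd (Sm f) (Sm g).
Proof. intros hf hg. destruct hlin as [_ [ha _]]. destruct (ha f g hf hg) as [h1 h2]. split; auto.
  unfold Sm, Tm. rewrite h2. vec. Qed.
Lemma mDscal a f : dom A f -> dom A (hscal a f) /\ Sm (hscal a f) = hscal a (Sm f).
Proof. intros hf. destruct hlin as [_ [_ hs]]. destruct (hs a f hf) as [h1 h2]. split; auto.
  unfold Sm, Tm. rewrite h2. vec. Qed.

Lemma A_from_S f : app A f = hadd (hscal l f) (hscal n (Sm f)).
Proof. unfold Sm, Tm. rewrite hscal_assoc, unit_mul_conj by apply hn1. rewrite hscal_one. vec. Qed.

Lemma mclosed : forall (u : nat -> H) x y, (forall k, dom A (u k)) -> hconverges u x ->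
   hconverges (fun k => Sm (u k)) y -> dom A x /\ Sm x = y.
Proof. intros u x y hD hu hS.
  assert (hA : hconverges (fun k => app A (u k)) (hadd (hscal l x) (hscal n y))).
  { apply (conv_ext (fun k => hadd (hscal l (u k)) (hscal n (Sm (u k))))).
    intro k. symmetry. apply A_from_S. apply conv_add; apply conv_scal; auto. }
  destruct (hcl u x _ hD hu hA) as [hx hAx]. split; auto.
  unfold Sm, Tm. rewrite hAx. rewrite <- (hscal_one _ y) at 2. rewrite <- (unit_conj_mul n hn1).
  rewrite <- hscal_assoc. f_equal. vec. Qed.

Lemma mRg_closed : hclosed_set (Rg (dom A) Sm).
Proof. intros y hy.
  assert (hr : range (shift A l) (hscal n y)).
  { apply hRc. intros e he. destruct (hy e he) as [w [[f [hf ->]] hw]]. exists (Tm f). split.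
    exists f. split; auto. 
    replace (hsub (hscal n y) (Tm f)) with (hscal n (hsub y (Sm f))).
    rewrite hnorm_scal, hn1. lra.
    unfold Sm. rewrite <- (hscal_one _ (Tm f)) at 2. rewrite <- (unit_mul_conj n hn1). rewrite <- hscal_assoc. vec. }
  destruct hr as [f [hf e]]. exists f. split; auto. unfold Sm. change (app (shift A l) f) with (Tm f) in e.
  rewrite <- e. rewrite hscal_assoc, unit_conj_mul by apply hn1. rewrite hscal_one. reflexivity. Qed.

Lemma Qform f : dom A f -> hnorm f = 1 -> Q Sm f = Cmul (Csub (inner (app A f) f) l) (Cconj n).
Proof. intros hf h1. unfold Q, Sm, Tm. rewrite inner_scall, inner_subl, inner_scall, inner_self.
  rewrite <- hnorm_sq, h1. destruct (inner (app A f) f), l, n. unfold RC. apply Ceq; simpl; ring. Qed.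

Lemma Num_of f : dom A f -> hnorm f = 1 -> Num A (inner (app A f) f).
Proof. intros. exists f. auto. Qed.

Lemma mAcc f : dom A f -> 0 <= Cre (inner (Sm f) f).
Proof. intro hf. destruct (Req_dec (hnorm f) 0) as [h0|h0].
  - apply hnorm_zero_eq in h0. subst f. rewrite inner_zero_r. simpl. lra.
  - pose proof (hnorm_nonneg f). pose proof (hnorm_sq f).
    set (f' := hscal (RC (/ hnorm f)) f).
    assert (hD : dom A f') by (apply mDscal; auto).
    assert (h1 : hnorm f' = 1).
    { unfold f'. rewrite hnorm_scal, Cabs_RC, Rabs_right. field; lra. left; apply Rinv_0_lt_compat; lra. }
    pose proof (hsup' _ (closure_incl _ _ (Num_of f' hD h1))) as hs.
    rewrite <- Qform in hs by auto. unfold f' in hs.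
    rewrite (Q_scal_real (dom A) Sm mDscal) in hs by auto. simpl in hs.
    fold (Q Sm f). assert (0 < / hnorm f * / hnorm f) by (apply Rmult_lt_0_compat; apply Rinv_0_lt_compat; lra).
    nra. Qed.

Lemma mSurj1 : forall x, exists g, dom A g /\ hadd (Sm g) g = x.
Proof. intro x. set (z0 := Csub l n).
  assert (hres : resolvent A z0).
  { apply NNPP. intro hno. pose proof (hsup' z0 (hspec z0 hno)) as hh.
    unfold z0 in hh. pose proof (Cabs_unit_n2 n hn1) as hh2. unfold Cn2 in hh2.
    destruct l, n; simpl in *. lra. }
  destruct hres as [B [_ [hB _]]]. destruct (hB (hscal n x)) as [hD he].
  exists (B (hscal n x)). split; auto. simpl in he.
  set (g := B (hscal n x)) in *.
  assert (ex : x = hscal (Cconj n) (hsub (app A g) (hscal z0 g))).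
  { rewrite he, hscal_assoc, unit_conj_mul by apply hn1. rewrite hscal_one. reflexivity. }
  transitivity (hadd (Sm g) (hscal (Cmul (Cconj n) n) g)).
  { rewrite unit_conj_mul by apply hn1. rewrite hscal_one. reflexivity. }
  rewrite ex. unfold Sm, Tm, z0. vec. Qed.

Lemma mWclose : forall del, 0 < del -> exists f, dom A f /\ hnorm f = 1 /\ Cabs (Q Sm f) < del.
Proof. intros del hd. destruct hbd as [hc _]. destruct (hc del hd) as [w [[f [hf [h1 ->]]] hw]].
  exists f. split; auto. split; auto. rewrite Qform by auto. rewrite Cabs_rot by apply hn1.
  replace (Csub (inner (app A f) f) l) with (Copp (Csub l (inner (app A f) f))) by csolve.
  rewrite Cabs_opp. exact hw. Qed.

Variable sg : R.
Hypothesis hsg : sg = 1 \/ sg = -1.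
Hypothesis hgam : forall M, exists eps, eps > 0 /\ forall z, Cboundary (Cclosure (Num A)) z -> Cabs (Csub z l) <= eps ->
   sg * xi_coord l n z > 0 -> eta_coord l n z / (xi_coord l n z * xi_coord l n z) >= M.

Lemma mCurv : forall M, exists eps, 0 < eps /\ forall f, dom A f -> hnorm f = 1 -> Cabs (Q Sm f) <= eps ->
   0 < sg * Cim (Q Sm f) -> M * (Cim (Q Sm f) * Cim (Q Sm f)) <= Cre (Q Sm f).
Proof. intro M. destruct (hgam M) as [eps [he hg]]. exists eps. split. lra.
  intros f hf h1 hab hs. rewrite Qform in * by auto.
  set (z := inner (app A f) f) in *.
  destruct (boundary_proj (Cclosure (Num A)) l n z hn1 (closure_closure _) hsup'
     (closure_incl _ _ (Num_of f hf h1))) as [z' [hbz [hxi [heta hab']]]].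
  rewrite Cabs_rot in hab by apply hn1.
  assert (hx : sg * xi_coord l n z' > 0) by (rewrite xi_eq, hxi; lra).
  specialize (hg z' hbz ltac:(lra) hx). rewrite eta_eq, xi_eq, hxi in hg.
  set (x := Cim (Cmul (Csub z l) (Cconj n))) in *.
  assert (hx0 : 0 < x * x).
  { assert (x <> 0) by (intro; subst; rewrite H0 in hs; lra). nra. }
  assert (M * (x * x) <= Cre (Cmul (Csub z' l) (Cconj n))).
  { apply Rge_le in hg. apply (Rmult_le_compat_r (x * x)) in hg; [|lra].
    unfold Rdiv in hg. rewrite Rmult_assoc, Rinv_l in hg by lra. lra. }
  lra. Qed.

Lemma mNonCorner : forall ka, 0 < ka -> exists f, dom A f /\ hnorm f = 1 /\ Cre (Q Sm f) < ka * (sg * Cim (Q Sm f)).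
Proof.
  intros ka hka. apply NNPP. intro hno.
  assert (hall : forall f, dom A f -> hnorm f = 1 -> ka * (sg * Cim (Q Sm f)) <= Cre (Q Sm f)).
  { intros f hf h1. apply Rnot_lt_le. intro hl. apply hno. exists f. auto. }
  apply hnc.
  set (t0 := Rmin (ka / 4) (/ 2)).
  assert (ht0 : 0 < t0) by (apply Rmin_glb_lt; lra).
  assert (ht1 : t0 <= ka / 4) by apply Rmin_l. assert (ht2 : t0 <= / 2) by apply Rmin_r.
  set (c := (1 - t0 * t0) / (1 + t0 * t0)). set (s := 2 * t0 / (1 + t0 * t0)).
  assert (hc : 0 < c) by (unfold c; apply Rdiv_lt_0_compat; nra).
  assert (hs : 0 < s) by (unfold s; apply Rdiv_lt_0_compat; nra).
  assert (hcs : c * c + s * s = 1) by (unfold c, s; field; nra).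
  assert (hsk : s <= c * ka).
  { assert (hq: 0 < /(1+t0*t0)) by (apply Rinv_0_lt_compat; nra).
    assert (h3 : t0*t0 <= /4) by nra.
    assert (h4 : 0 <= (1 - t0*t0 - 3/4) * ka) by (apply Rmult_le_pos; lra).
    assert (h2 : 2*t0 <= (1 - t0*t0)*ka) by nra.
    unfold s, c, Rdiv. nra. }
  set (m := Cmul n (mkC c (- (sg * s)))).
  exists n, m. split. exact hsupp. split; [split|split].
  - unfold m. rewrite Cabs_mul, hn1. rewrite Cabs_Cn2. unfold Cn2; simpl.
    replace (c * c + - (sg * s) * - (sg * s)) with 1. rewrite sqrt_1; ring.
    destruct hsg; subst sg; nra.
  -
    assert (hNum : forall z, Num A z -> Cre (Cmul (Csub z l) (Cconj m)) >= 0).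
    { intros z [f [hf [h1 ->]]]. specialize (hall f hf h1). rewrite Qform in hall by auto.
      pose proof (hsup' _ (closure_incl _ _ (Num_of f hf h1))) as hpos.
      replace (Cre (Cmul (Csub (inner (app A f) f) l) (Cconj m))) with
        (c * Cre (Cmul (Csub (inner (app A f) f) l) (Cconj n)) - sg * s * Cim (Cmul (Csub (inner (app A f) f) l) (Cconj n))).
      2:{ unfold m. destruct (inner (app A f) f), l, n. simpl. ring. }
      set (eta := Cre (Cmul (Csub (inner (app A f) f) l) (Cconj n))) in *.
      set (xi := Cim (Cmul (Csub (inner (app A f) f) l) (Cconj n))) in *.
      destruct (Rle_dec (sg * xi) 0).
      + assert (0 <= c * eta) by nra. nra.
      + assert (s * (sg * xi) <= c * eta).
        { apply Rle_trans with (c * ka * (sg * xi)). apply Rmult_le_compat_r; lra. nra. }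
        lra. }
    intros z hz. apply Rnot_lt_ge. intro hneg.
    destruct (hz (- Cre (Cmul (Csub z l) (Cconj m)))) as [w [hw hzw]]. lra.
    specialize (hNum w hw).
    assert (Cabs m = 1).
    { unfold m. rewrite Cabs_mul, hn1. rewrite Cabs_Cn2. unfold Cn2; simpl.
      replace (c * c + - (sg * s) * - (sg * s)) with 1. rewrite sqrt_1; ring.
      destruct hsg; subst sg; nra. }
    assert (hdiff : Cre (Cmul (Csub w l) (Cconj m)) - Cre (Cmul (Csub z l) (Cconj m)) <= Cabs (Csub z w)).
    { replace (Cre (Cmul (Csub w l) (Cconj m)) - Cre (Cmul (Csub z l) (Cconj m))) with
        (Cre (Cmul (Copp (Csub z w)) (Cconj m))) by (destruct w, z, l, m; simpl; ring).
      pose proof (Cre_le_Cabs (Cmul (Copp (Csub z w)) (Cconj m))).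
      rewrite Cabs_mul, Cabs_opp, Cabs_conj, H0 in H1. pose proof (Rle_abs (Cre (Cmul (Copp (Csub z w)) (Cconj m)))). lra. }
    lra.
  - intro e. unfold m in e.
    assert (hx : mkC c (- (sg * s)) = C1).
    { transitivity (Cmul (Cmul (Cconj n) n) (mkC c (- (sg * s)))).
      rewrite unit_conj_mul by apply hn1. rewrite Cmul_1l. reflexivity.
      rewrite <- Cmul_assoc, <- e. apply unit_conj_mul, hn1. }
    apply (f_equal Cim) in hx. simpl in hx. destruct hsg; subst sg; lra.
  - intro e. unfold m in e.
    assert (e2 : Cmul n (mkC c (- (sg * s))) = Copp n).
    { symmetry. rewrite e at 1. csolve. }
    assert (hx : mkC c (- (sg * s)) = Copp C1).
    { transitivity (Cmul (Cmul (Cconj n) n) (mkC c (- (sg * s)))).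
      rewrite unit_conj_mul by apply hn1. rewrite Cmul_1l. reflexivity.
      rewrite <- Cmul_assoc, e2. pose proof (Cabs_unit_n2 _ hn1) as hh. unfold Cn2 in hh.
      destruct n; simpl in *. apply Ceq; simpl; lra. }
    apply (f_equal Cre) in hx. simpl in hx. lra.
Qed.

Lemma main_false : False.
Proof.
  exact (core_false (dom A) Sm mD0 mDadd mDscal mclosed mRg_closed mAcc mSurj1 sg hsg mCurv mWclose mNonCorner).
Qed.
End Main.

Open Scope R_scope.

Theorem mainTheorem5 (H : Hilbert) (A : Operator H) (l : Cplx) :
  linear_operator A ->
  densely_defined A ->
  closed_operator A ->
  (exists z, Cinterior (Num A) z) ->
  (exists z, ~ Num A z) ->
  (forall f, dom A f -> adjoint_dom A f) ->
  (forall z, spectrum A z -> Cclosure (Num A) z) ->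
  Cboundary (Num A) l ->
  unilateral_infinite_curvature (Cclosure (Num A)) l ->
  ~ corner_point (Cclosure (Num A)) l ->
  ~ hclosed_set (range (shift A l)) /\ ess_spectrum A l.
Proof.
  intros hlin hdense hcl hint hnot hadj hspec hbd hcurv hnc.
  assert (hnr : ~ hclosed_set (range (shift A l))).
  { intro hRc. destruct hcurv as [n [[hsupp _] hside]].
    destruct hside as [hp|hm].
    - apply (main_false A l n hlin hcl hspec hbd hsupp hnc hRc 1 (or_introl eq_refl)).
      intro M. destruct (hp M) as [eps [he hg]]. exists eps. split; auto.
      intros z hz hz2 hx. apply hg; auto. lra.
    - apply (main_false A l n hlin hcl hspec hbd hsupp hnc hRc (-1) (or_intror eq_refl)).
      intro M. destruct (hm M) as [eps [he hg]]. exists eps. split; auto.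
      intros z hz hz2 hx. apply hg; auto. lra. }
  split; auto. intros [hf _]. apply hnr. exact hf.
Qed.
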